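(* Let $\alpha$ be a PV number and let $a:\mathbb N\to\mathbb C$, $\tau:\mathbb N\to\mathbb Z$ (integer valued) satisfy $\sum_{k}|a(k)|e^{\eta|\tau(k)|}<\infty$ for some $\eta>0$, and $\sum_k a(k)=|\alpha|$. Let $\varphi$ be a scalar valued refinable function for the data $(\alpha,a,\tau)$. Then $\widehat\varphi$ does not vanish at infinity, i.e. it is not true that $\widehat\varphi(y)\to 0$ as $|y|\to\infty$; consequently $\varphi$ is not integrable.
   Context: A PV number is a real algebraic integer $\alpha$ of degree $d\ge 2$ all of whose Galois conjugates other than $\alpha$ itself have modulus $<1$ (so $|\alpha|>1$). Put $\widehat a(y)=|\alpha|^{-1}\sum_{k\in\mathbb N}a(k)e^{-2\pi i\tau(k)y}$, $y\in\mathbb R$. A scalar valued refinable function for $(\alpha,a,\tau)$ is a nonzero complex tempered distribution $\varphi$ on $\mathbb R$ satisfying $\varphi(x)=\sum_{k\in\mathbb N}a(k)\varphi(\alpha x-\tau(k))$, whose Fourier transform $\widehat\varphi(y)=\int\varphi(x)e^{-2\pi i xy}\,dx$ is a continuous function with $\widehat\varphi(0)\neq0$; equivalently $\widehat\varphi(y)=\widehat a(y\alpha^{-1})\widehat\varphi(y\alpha^{-1})$ for all $y\in\mathbb R$. *)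

(* Defs.v *)
From Stdlib Require Import Reals ZArith QArith List.
Open Scope R_scope.

Record Cplx := mkC { Re : R ; Im : R }.
Definition RtoC (x : R) : Cplx := mkC x 0.
Definition C0 : Cplx := RtoC 0.
Definition Cadd (z w : Cplx) : Cplx := mkC (Re z + Re w) (Im z + Im w).
Definition Csub (z w : Cplx) : Cplx := mkC (Re z - Re w) (Im z - Im w).
Definition Cmul (z w : Cplx) : Cplx :=
  mkC (Re z * Re w - Im z * Im w) (Re z * Im w + Im z * Re w).
Definition Cmod (z : Cplx) : R := sqrt (Re z ^ 2 + Im z ^ 2).
Definition Cexpi (t : R) : Cplx := mkC (cos t) (sin t).

Fixpoint Cpsum (u : nat -> Cplx) (n : nat) : Cplx :=
  match n with O => C0 | S m => Cadd (Cpsum u m) (u m) end.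
Definition Cseries (u : nat -> Cplx) (l : Cplx) : Prop :=
  forall eps, eps > 0 -> exists N : nat, forall n, (n >= N)%nat ->
    Cmod (Csub (Cpsum u n) l) < eps.

(** * Polynomials (coefficient lists, constant term first) *)
Fixpoint Zpoly_evalC (P : list Z) (z : Cplx) : Cplx :=
  match P with nil => C0 | c :: P' => Cadd (RtoC (IZR c)) (Cmul z (Zpoly_evalC P' z)) end.
Fixpoint Qpoly_evalR (P : list Q) (x : R) : R :=
  match P with nil => 0 | c :: P' => Q2R c + x * Qpoly_evalR P' x end.

Definition minpoly_of_degree (alpha : R) (d : nat) (P : list Z) : Prop :=
  length P = S d /\ nth d P 0%Z = 1%Z /\
  Zpoly_evalC P (RtoC alpha) = C0 /\
  (forall Qp : list Q, (length Qp <= d)%nat -> Qpoly_evalR Qp alpha = 0 ->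
     forall i, Qeq (nth i Qp 0%Q) 0%Q).

(** PV number: real algebraic integer of degree d >= 2 all of whose Galois
    conjugates other than alpha (the other complex roots of its minimal
    polynomial) have modulus < 1. *)
Definition is_PV (alpha : R) : Prop :=
  exists (d : nat) (P : list Z), (2 <= d)%nat /\ minpoly_of_degree alpha d P /\
    (forall z : Cplx, Zpoly_evalC P z = C0 -> z <> RtoC alpha -> Cmod z < 1).

(** ahat(y) = |alpha|^{-1} sum_k a(k) e^{-2 pi i tau(k) y}; "ahat_val alpha a tau y v"
    means that this series converges and ahat(y) = v. *)
Definition ahat_val (alpha : R) (a : nat -> Cplx) (tau : nat -> Z) (y : R) (v : Cplx) : Prop :=
  Cseries (fun k => Cmul (a k) (Cexpi (- 2 * PI * IZR (tau k) * y)))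
          (Cmul (RtoC (Rabs alpha)) v).

Definition Ccontinuous (f : R -> Cplx) : Prop :=
  forall x eps, eps > 0 -> exists delta, delta > 0 /\
    forall x', Rabs (x' - x) < delta -> Cmod (Csub (f x') (f x)) < eps.

(** Fourier-side characterization (from the paper) of the Fourier transform
    phihat of a scalar valued refinable function for (alpha, a, tau):
    continuous, phihat(0) <> 0, and phihat(y) = ahat(y/alpha) phihat(y/alpha). *)
Definition refinable_FT (alpha : R) (a : nat -> Cplx) (tau : nat -> Z) (phihat : R -> Cplx) : Prop :=
  Ccontinuous phihat /\ phihat 0 <> C0 /\
  forall y, exists v, ahat_val alpha a tau (y / alpha) v /\
    phihat y = Cmul v (phihat (y / alpha)).

Definition vanishes_at_infinity (f : R -> Cplx) : Prop :=
  forall eps, eps > 0 -> exists M, forall y, Rabs y > M -> Cmod (f y) < eps.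

(* Main.v *)
Require Import Defs.
From Stdlib Require Import Reals ZArith QArith List Lra Lia.
From Stdlib Require Import ClassicalEpsilon Classical.
From Coquelicot Require Complex Coquelicot.
From mathcomp Require ssreflect ssrbool ssrfun eqtype ssrnat seq fintype bigop ssralg ssrnum Rstruct complex.
Open Scope R_scope.

Definition Cone : Cplx := RtoC 1.
Definition Copp' (z : Cplx) : Cplx := mkC (- Re z) (- Im z).

Lemma Cplx_eq (z w : Cplx) : Re z = Re w -> Im z = Im w -> z = w.
Proof. destruct z, w; simpl; intros; subst; reflexivity. Qed.

Ltac ceq := apply Cplx_eq; simpl; ring.

Lemma Cplx_ring : ring_theory C0 Cone Cadd Cmul Csub Copp' (@eq Cplx).
Proof.
  constructor; intros; unfold C0, Cone, RtoC, Cadd, Cmul, Csub, Copp'; ceq.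
Qed.
Add Ring Cplx_ring_inst : Cplx_ring.

Definition toCq (z : Cplx) : Complex.C := (Re z, Im z).

Lemma Cmod_toC z : Cmod z = Complex.Cmod (toCq z).
Proof. reflexivity. Qed.

Lemma Cmod_ge0 z : 0 <= Cmod z.
Proof. apply sqrt_pos. Qed.

Lemma Cmod_triangle z w : Cmod (Cadd z w) <= Cmod z + Cmod w.
Proof.
  rewrite !Cmod_toC. replace (toCq (Cadd z w)) with (Complex.Cplus (toCq z) (toCq w)).
  apply Complex.Cmod_triangle. reflexivity.
Qed.

Lemma Cmod_mul z w : Cmod (Cmul z w) = Cmod z * Cmod w.
Proof.
  rewrite !Cmod_toC. replace (toCq (Cmul z w)) with (Complex.Cmult (toCq z) (toCq w)).
  apply Complex.Cmod_mult. reflexivity.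
Qed.

Lemma Cmod_RtoC x : Cmod (RtoC x) = Rabs x.
Proof. unfold Cmod, RtoC; simpl. rewrite <- sqrt_Rsqr_abs. f_equal. unfold Rsqr. ring. Qed.

Lemma Cmod_eq0 z : Cmod z = 0 -> z = C0.
Proof.
  intro H. rewrite Cmod_toC in H. apply Complex.Cmod_eq_0 in H.
  destruct z; unfold toCq in H; simpl in H. injection H; intros; subst. reflexivity.
Qed.

Lemma Cmod_C0 : Cmod C0 = 0.
Proof. unfold C0. rewrite Cmod_RtoC. apply Rabs_R0. Qed.

Lemma Cmod_opp z : Cmod (Copp' z) = Cmod z.
Proof. unfold Cmod, Copp'; simpl. f_equal. ring. Qed.

Lemma Cmod_sub_sym z w : Cmod (Csub z w) = Cmod (Csub w z).
Proof. replace (Csub z w) with (Copp' (Csub w z)) by ring. apply Cmod_opp. Qed.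

Lemma Cmod_sub_le z w : Cmod z - Cmod w <= Cmod (Csub z w).
Proof.
  pose proof (Cmod_triangle (Csub z w) w). replace (Cadd (Csub z w) w) with z in H by ring. lra.
Qed.

Lemma Cmod_Re z : Rabs (Re z) <= Cmod z.
Proof. unfold Cmod. rewrite <- sqrt_Rsqr_abs. apply sqrt_le_1_alt. unfold Rsqr. nra. Qed.
Lemma Cmod_Im z : Rabs (Im z) <= Cmod z.
Proof. unfold Cmod. rewrite <- sqrt_Rsqr_abs. apply sqrt_le_1_alt. unfold Rsqr. nra. Qed.

Lemma Cmod_le_ReIm z : Cmod z <= Rabs (Re z) + Rabs (Im z).
Proof.
  destruct z as [a b]. unfold Cmod; simpl.
  apply Rsqr_incr_0_var. 2: pose proof (Rabs_pos a); pose proof (Rabs_pos b); lra.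
  rewrite Rsqr_sqrt by nra. unfold Rsqr.
  pose proof (Rabs_pos a); pose proof (Rabs_pos b).
  pose proof (Rsqr_abs a); pose proof (Rsqr_abs b). unfold Rsqr in *. simpl. nra.
Qed.

Lemma Cmod_expi t : Cmod (Cexpi t) = 1.
Proof. unfold Cmod, Cexpi; simpl. pose proof (sin2_cos2 t) as H. unfold Rsqr in H. replace (cos t * (cos t * 1) + sin t * (sin t * 1)) with 1 by lra. apply sqrt_1. Qed.

Lemma Cexpi_add s t : Cexpi (s + t) = Cmul (Cexpi s) (Cexpi t).
Proof. unfold Cexpi, Cmul; simpl. apply Cplx_eq; simpl; [rewrite cos_plus | rewrite sin_plus]; ring. Qed.

Lemma Cmul_RtoC x y : Cmul (RtoC x) (RtoC y) = RtoC (x * y).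
Proof. ceq. Qed.
Lemma Cadd_RtoC x y : Cadd (RtoC x) (RtoC y) = RtoC (x + y).
Proof. ceq. Qed.
Lemma Csub_RtoC x y : Csub (RtoC x) (RtoC y) = RtoC (x - y).
Proof. ceq. Qed.


Fixpoint Rpsum (b : nat -> R) (n : nat) : R :=
  match n with O => 0 | S m => Rpsum b m + b m end.

Lemma Rpsum_sum_f b n : Rpsum b (S n) = sum_f_R0 b n.
Proof. induction n; simpl in *; [ring|]. rewrite <- IHn. simpl. ring. Qed.

Lemma Rpsum_mono b n m : (forall k, 0 <= b k) -> (n <= m)%nat -> Rpsum b n <= Rpsum b m.
Proof.
  intros Hb H. induction H; [lra|]. simpl. specialize (Hb m). lra.
Qed.

Lemma Rpsum_le b b' n : (forall k, b k <= b' k) -> Rpsum b n <= Rpsum b' n.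
Proof. intros H; induction n; simpl; [lra|]. specialize (H n); lra. Qed.

Lemma Rpsum_ext b b' n : (forall k, b k = b' k) -> Rpsum b n = Rpsum b' n.
Proof. intros H; induction n; simpl; [lra|]. rewrite H, IHn; lra. Qed.

Lemma Rpsum_scal c b n : Rpsum (fun k => c * b k) n = c * Rpsum b n.
Proof. induction n; simpl; [ring|]. rewrite IHn; ring. Qed.

Lemma Rpsum_add b b' n : Rpsum (fun k => b k + b' k) n = Rpsum b n + Rpsum b' n.
Proof. induction n; simpl; [ring|]. rewrite IHn; ring. Qed.

Lemma Rpsum_le_lim b l : (forall k, 0 <= b k) -> infinite_sum b l -> forall n, Rpsum b n <= l.
Proof.
  intros Hb Hl n. destruct (Rle_or_lt (Rpsum b n) l) as [H|H]; auto.
  exfalso. destruct (Hl (Rpsum b n - l)) as [N HN]; [lra|].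
  specialize (HN (max N n) (Nat.le_max_l _ _)). unfold R_dist in HN.
  rewrite <- Rpsum_sum_f in HN.
  assert (Rpsum b n <= Rpsum b (S (max N n))) by (apply Rpsum_mono; auto; lia).
  apply Rabs_def2 in HN. lra.
Qed.

Lemma Cpsum_add u v n : Cpsum (fun k => Cadd (u k) (v k)) n = Cadd (Cpsum u n) (Cpsum v n).
Proof. induction n; simpl; [unfold C0, RtoC, Cadd; ceq|]. rewrite IHn; ring. Qed.
Lemma Cpsum_sub u v n : Cpsum (fun k => Csub (u k) (v k)) n = Csub (Cpsum u n) (Cpsum v n).
Proof. induction n; simpl; [unfold C0, RtoC, Csub; ceq|]. rewrite IHn; ring. Qed.
Lemma Cpsum_scal c u n : Cpsum (fun k => Cmul c (u k)) n = Cmul c (Cpsum u n).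
Proof. induction n; simpl; [unfold C0, RtoC, Cmul; ceq|]. rewrite IHn; ring. Qed.
Lemma Cpsum_ext u v n : (forall k, u k = v k) -> Cpsum u n = Cpsum v n.
Proof. intros H; induction n; simpl; auto. rewrite IHn, H; auto. Qed.

Lemma Cpsum_Cmod u n : Cmod (Cpsum u n) <= Rpsum (fun k => Cmod (u k)) n.
Proof.
  induction n; simpl. rewrite Cmod_C0; lra.
  pose proof (Cmod_triangle (Cpsum u n) (u n)); lra.
Qed.

Lemma Cpsum_diff u n m : (n <= m)%nat ->
  Cmod (Csub (Cpsum u m) (Cpsum u n)) <= Rpsum (fun k => Cmod (u k)) m - Rpsum (fun k => Cmod (u k)) n.
Proof.
  intros H; induction H.
  - replace (Csub (Cpsum u n) (Cpsum u n)) with C0 by ring. rewrite Cmod_C0; lra.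
  - simpl. replace (Csub (Cadd (Cpsum u m) (u m)) (Cpsum u n)) with (Cadd (Csub (Cpsum u m) (Cpsum u n)) (u m)) by ring.
    pose proof (Cmod_triangle (Csub (Cpsum u m) (Cpsum u n)) (u m)). lra.
Qed.

Lemma Cseries_add u v L M : Cseries u L -> Cseries v M -> Cseries (fun k => Cadd (u k) (v k)) (Cadd L M).
Proof.
  intros Hu Hv eps He. destruct (Hu (eps/2)) as [N1 H1]; [lra|]. destruct (Hv (eps/2)) as [N2 H2]; [lra|].
  exists (max N1 N2). intros n Hn. rewrite Cpsum_add.
  replace (Csub (Cadd (Cpsum u n) (Cpsum v n)) (Cadd L M)) with (Cadd (Csub (Cpsum u n) L) (Csub (Cpsum v n) M)) by ring.
  eapply Rle_lt_trans; [apply Cmod_triangle|].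
  specialize (H1 n ltac:(lia)); specialize (H2 n ltac:(lia)). lra.
Qed.

Lemma Cseries_scal c u L : Cseries u L -> Cseries (fun k => Cmul c (u k)) (Cmul c L).
Proof.
  intros Hu eps He. destruct (Hu (eps / (Cmod c + 1))) as [N H1].
  { apply Rdiv_lt_0_compat; auto. pose proof (Cmod_ge0 c); lra. }
  exists N. intros n Hn. rewrite Cpsum_scal.
  replace (Csub (Cmul c (Cpsum u n)) (Cmul c L)) with (Cmul c (Csub (Cpsum u n) L)) by ring.
  rewrite Cmod_mul. specialize (H1 n Hn). pose proof (Cmod_ge0 c).
  pose proof (Cmod_ge0 (Csub (Cpsum u n) L)).
  apply Rle_lt_trans with ((Cmod c + 1) * Cmod (Csub (Cpsum u n) L)). nra.
  apply Rmult_lt_compat_l with (r := Cmod c + 1) in H1; [|lra].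
  replace ((Cmod c + 1) * (eps / (Cmod c + 1))) with eps in H1 by (field; lra). lra.
Qed.

Lemma Cseries_ext u v L : (forall k, u k = v k) -> Cseries u L -> Cseries v L.
Proof. intros H Hu eps He. destruct (Hu eps He) as [N HN]. exists N; intros n Hn. rewrite <- (Cpsum_ext u v n H). auto. Qed.

Lemma Cseries_sub u v L M : Cseries u L -> Cseries v M -> Cseries (fun k => Csub (u k) (v k)) (Csub L M).
Proof.
  intros Hu Hv. replace (Csub L M) with (Cadd L (Cmul (RtoC (-1)) M)) by (unfold RtoC, Cmul, Cadd, Csub; ceq).
  eapply Cseries_ext; [|apply Cseries_add; [apply Hu|apply Cseries_scal; apply Hv]].
  intros k; simpl. unfold RtoC, Cmul, Cadd, Csub; ceq.
Qed.

Lemma Cseries_bound u L B : Cseries u L -> (forall n, Cmod (Cpsum u n) <= B) -> Cmod L <= B.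
Proof.
  intros Hu HB. apply Rnot_lt_le; intro H.
  destruct (Hu (Cmod L - B)) as [N HN]; [lra|]. specialize (HN N (le_n _)). specialize (HB N).
  pose proof (Cmod_sub_le L (Cpsum u N)). rewrite Cmod_sub_sym in H0. lra.
Qed.

Lemma Cseries_unique u L M : Cseries u L -> Cseries u M -> L = M.
Proof.
  intros HL HM. assert (H := Cseries_sub u u L M HL HM).
  assert (Cmod (Csub L M) <= 0).
  { apply (Cseries_bound _ _ _ H). intro n. rewrite Cpsum_sub. replace (Csub (Cpsum u n) (Cpsum u n)) with C0 by ring. rewrite Cmod_C0; lra. }
  pose proof (Cmod_ge0 (Csub L M)). assert (Cmod (Csub L M) = 0) by lra.
  apply Cmod_eq0 in H2. replace L with (Cadd (Csub L M) M) by ring. rewrite H2. ring.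
Qed.

Lemma Rcauchy_lim (r : nat -> R) (B : nat -> R) :
  (forall n m, (n <= m)%nat -> Rabs (r m - r n) <= B m - B n) ->
  (exists l, Un_cv B l) -> exists l, Un_cv r l.
Proof.
  intros H [l Hl].
  assert (HB : Cauchy_crit B) by (apply CV_Cauchy; exists l; auto).
  assert (Hr : Cauchy_crit r).
  { intros eps He. destruct (HB eps He) as [N HN]. exists N. intros n m Hn Hm. unfold R_dist in *.
    destruct (le_ge_dec n m).
    - specialize (H n m l0). specialize (HN m n Hm Hn). rewrite Rabs_minus_sym.
      eapply Rle_lt_trans; [apply H|]. eapply Rle_lt_trans; [apply Rle_abs|]. auto.
    - specialize (H m n g). specialize (HN n m Hn Hm).
      eapply Rle_lt_trans; [apply H|]. eapply Rle_lt_trans; [apply Rle_abs|]. auto. }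
  destruct (R_complete r Hr) as [x Hx]. exists x; auto.
Qed.

Lemma abs_conv u b l : (forall k, Cmod (u k) <= b k) -> infinite_sum b l -> exists L, Cseries u L.
Proof.
  intros Hub Hl.
  assert (HB : exists l, Un_cv (Rpsum (fun k => Cmod (u k))) l).
  { pose (bb := fun k => Cmod (u k)).
    assert (Hc : Cauchy_crit (Rpsum bb)).
    { intros eps He. destruct (CV_Cauchy (sum_f_R0 b) (exist _ l Hl) eps He) as [N HN].
      exists (S N). intros n m Hn Hm. unfold R_dist.
      destruct n as [|n]; [lia|]. destruct m as [|m]; [lia|].
      assert (Hb0 : forall k, 0 <= bb k) by (intro; apply Cmod_ge0).
      specialize (HN n m ltac:(lia) ltac:(lia)). unfold R_dist in HN. rewrite <- !Rpsum_sum_f in HN.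
      assert (forall p q, (p <= q)%nat -> 0 <= Rpsum bb q - Rpsum bb p <= Rpsum b q - Rpsum b p).
      { intros p q Hpq. induction Hpq; [lra|]. simpl. specialize (Hub m0). specialize (Hb0 m0). unfold bb in *. lra. }
      destruct (le_ge_dec (S n) (S m)).
      + specialize (H _ _ l0). rewrite Rabs_minus_sym, Rabs_right by lra. rewrite Rabs_minus_sym in HN.
        pose proof (Rle_abs (Rpsum b (S m) - Rpsum b (S n))). lra.
      + specialize (H _ _ g). rewrite Rabs_right by lra.
        pose proof (Rle_abs (Rpsum b (S n) - Rpsum b (S m))). lra. }
    destruct (R_complete _ Hc) as [x Hx]. exists x; auto. }
  destruct (Rcauchy_lim (fun n => Re (Cpsum u n)) (Rpsum (fun k => Cmod (u k)))) as [lr Hr]; auto.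
  { intros n m Hnm. pose proof (Cpsum_diff u n m Hnm). pose proof (Cmod_Re (Csub (Cpsum u m) (Cpsum u n))).
    simpl in H0. lra. }
  destruct (Rcauchy_lim (fun n => Im (Cpsum u n)) (Rpsum (fun k => Cmod (u k)))) as [li Hi]; auto.
  { intros n m Hnm. pose proof (Cpsum_diff u n m Hnm). pose proof (Cmod_Im (Csub (Cpsum u m) (Cpsum u n))).
    simpl in H0. lra. }
  exists (mkC lr li). intros eps He.
  destruct (Hr (eps/2)) as [N1 H1]; [lra|]. destruct (Hi (eps/2)) as [N2 H2]; [lra|].
  exists (max N1 N2). intros n Hn. eapply Rle_lt_trans; [apply Cmod_le_ReIm|].
  specialize (H1 n ltac:(lia)); specialize (H2 n ltac:(lia)). unfold R_dist in *. simpl. lra.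
Qed.

Lemma abs_bound u b l L : (forall k, Cmod (u k) <= b k) -> infinite_sum b l -> Cseries u L -> Cmod L <= l.
Proof.
  intros Hub Hl HL. apply (Cseries_bound u L l HL). intro n.
  eapply Rle_trans; [apply Cpsum_Cmod|]. eapply Rle_trans; [apply Rpsum_le; apply Hub|].
  apply Rpsum_le_lim; auto. intro k; specialize (Hub k); pose proof (Cmod_ge0 (u k)); lra.
Qed.

Lemma infinite_sum_scal b l c : infinite_sum b l -> infinite_sum (fun k => c * b k) (c * l).
Proof.
  intros H. assert (H1 : Un_cv (fun _ => c) c) by (intros e He; exists O; intros; unfold R_dist; rewrite Rminus_diag, Rabs_R0; lra).
  pose proof (CV_mult _ _ _ _ H1 H) as H2.
  assert (E : forall n, sum_f_R0 (fun k => c * b k) n = c * sum_f_R0 b n).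
  { induction n; simpl; [ring|]. rewrite IHn. ring. }
  intros e He. destruct (H2 e He) as [N HN]. exists N. intros n Hn. specialize (HN n Hn).
  rewrite E; auto.
Qed.

Module TaylorM.
Import Coquelicot.Coquelicot.

Lemma cos_shift_half x : cos (x + PI / 2) = - sin x.
Proof. rewrite cos_plus, cos_PI2, sin_PI2. ring. Qed.

Lemma Derive_n_cos_lin th t m : forall s,
  Derive_n (fun s => cos (th + s * t)) m s = t ^ m * cos (th + s * t + INR m * (PI / 2)).
Proof.
  induction m; intro s.
  - simpl. f_equal; ring_simplify; auto. rewrite Rmult_0_l, Rplus_0_r. ring.
  - simpl Derive_n. rewrite (Derive_ext _ _ _ IHm).
    assert (is_derive (fun s => t ^ m * cos (th + s * t + INR m * (PI / 2))) s
                      (t ^ m * (- sin (th + s * t + INR m * (PI / 2)) * t))).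
    { auto_derive; auto. ring. }
    etransitivity; [apply is_derive_unique; exact H|]. rewrite S_INR.
    replace (th + s * t + (INR m + 1) * (PI / 2)) with ((th + s * t + INR m * (PI / 2)) + PI/2) by ring.
    rewrite cos_shift_half. simpl. ring.
Qed.

Lemma ex_derive_n_cos_lin th t k s : ex_derive_n (fun s => cos (th + s * t)) k s.
Proof.
  destruct k; simpl; auto.
  apply ex_derive_ext with (f := fun s => t ^ k * cos (th + s * t + INR k * (PI / 2))).
  intro; symmetry; apply Derive_n_cos_lin.
  auto_derive; auto.
Qed.

Lemma taylor_cos th t n :
  Rabs (cos (th + t) - sum_f_R0 (fun m => t ^ m / INR (Factorial.fact m) * cos (th + INR m * (PI / 2))) n)
  <= Rabs t ^ S n / INR (Factorial.fact (S n)).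
Proof.
  destruct (Taylor_Lagrange (fun s => cos (th + s * t)) n 0 1 Rlt_0_1) as [z [Hz E]].
  { intros; apply ex_derive_n_cos_lin. }
  replace (th + t) with (th + 1 * t) by ring. rewrite E.
  rewrite (sum_eq _ (fun m => t ^ m / INR (Factorial.fact m) * cos (th + INR m * (PI / 2)))).
  2:{ intros i _. rewrite Derive_n_cos_lin. replace (1 - 0) with 1 by ring. rewrite pow1.
      replace (th + 0 * t) with th by ring. field. apply INR_fact_neq_0. }
  rewrite Derive_n_cos_lin. replace (1 - 0) with 1 by ring. rewrite pow1.
  match goal with |- Rabs (?A + ?B - ?A) <= _ => replace (A + B - A) with B by ring end.
  rewrite Rabs_mult, Rabs_mult, RPow_abs.
  rewrite (Rabs_right (1 / _)). 2: { apply Rle_ge, Rlt_le, Rdiv_lt_0_compat; [lra|apply INR_fact_lt_0]. }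
  assert (Rabs (cos (th + z * t + INR (S n) * (PI / 2))) <= 1) by apply Rabs_le, COS_bound.
  assert (0 <= Rabs t ^ S n) by (apply pow_le, Rabs_pos).
  assert (0 < INR (Factorial.fact (S n))) by apply INR_fact_lt_0.
  unfold Rdiv. rewrite Rmult_1_l.
  assert (0 < / INR (Factorial.fact (S n))) by (apply Rinv_0_lt_compat; auto).
  pose proof (Rabs_pos (t ^ S n)). unfold Rdiv in *.
  set (c := Rabs (cos _)) in *. set (q := / INR _) in *. set (p := Rabs (t ^ S n)) in *.
  assert (q * (p * c) <= q * (p * 1)) by (apply Rmult_le_compat_l; [lra|]; apply Rmult_le_compat_l; lra). lra.
Qed.

Lemma term_le_exp x m : 0 <= x -> x ^ m / INR (Factorial.fact m) <= exp x.
Proof.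
  intro Hx. eapply Rle_trans; [|apply (exp_ge_taylor x m Hx)].
  destruct m; simpl; [lra|].
  assert (0 <= sum_f_R0 (fun k => x ^ k / INR (Factorial.fact k)) m).
  { apply cond_pos_sum. intro k. apply Rmult_le_pos; [apply pow_le; auto|]. left; apply Rinv_0_lt_compat, INR_fact_lt_0. }
  simpl in H. lra.
Qed.

End TaylorM.
Import TaylorM.


Lemma Re_Cpsum u n : Re (Cpsum u n) = Rpsum (fun k => Re (u k)) n.
Proof. induction n; simpl; auto. rewrite IHn; auto. Qed.
Lemma Im_Cpsum u n : Im (Cpsum u n) = Rpsum (fun k => Im (u k)) n.
Proof. induction n; simpl; auto. rewrite IHn; auto. Qed.

Lemma sin_as_cos x : sin x = cos (x - PI / 2).
Proof. rewrite cos_minus, cos_PI2, sin_PI2. ring. Qed.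

Lemma expi_taylor th t n :
  Cmod (Csub (Cexpi (th + t))
     (Cpsum (fun m => Cmul (RtoC (t ^ m / INR (Factorial.fact m))) (Cexpi (th + INR m * (PI / 2)))) (S n)))
  <= 2 * (Rabs t ^ S n / INR (Factorial.fact (S n))).
Proof.
  eapply Rle_trans; [apply Cmod_le_ReIm|].
  match goal with |- Rabs (Re (Csub ?A ?B)) + Rabs (Im (Csub ?A ?B)) <= _ =>
    change (Rabs (Re A - Re B) + Rabs (Im A - Im B) <= 2 * (Rabs t ^ S n / INR (Factorial.fact (S n)))) end.
  rewrite Re_Cpsum, Im_Cpsum, !Rpsum_sum_f. unfold Cexpi, Cmul, RtoC. cbn [Re Im].
  pose proof (taylor_cos th t n) as H1. pose proof (taylor_cos (th - PI/2) t n) as H2.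
  rewrite (sin_as_cos (th + t)). replace (th + t - PI / 2) with (th - PI/2 + t) by ring.
  assert (E1 : sum_f_R0 (fun k => t ^ k / INR (Factorial.fact k) * cos (th + INR k * (PI / 2)) - 0 * sin (th + INR k * (PI / 2))) n
          = sum_f_R0 (fun m => t ^ m / INR (Factorial.fact m) * cos (th + INR m * (PI / 2))) n).
  { apply sum_eq; intros; ring. }
  assert (E2 : sum_f_R0 (fun k => t ^ k / INR (Factorial.fact k) * sin (th + INR k * (PI / 2)) + 0 * cos (th + INR k * (PI / 2))) n
          = sum_f_R0 (fun m => t ^ m / INR (Factorial.fact m) * cos (th - PI / 2 + INR m * (PI / 2))) n).
  { apply sum_eq; intros. rewrite sin_as_cos. replace (th + INR i * (PI / 2) - PI / 2) with (th - PI / 2 + INR i * (PI / 2)) by ring. ring. }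
  rewrite E1, E2. lra.
Qed.



Lemma Cseries_Cpsum (g : nat -> nat -> Cplx) (G : nat -> Cplx) n :
  (forall m, Cseries (fun k => g k m) (G m)) -> Cseries (fun k => Cpsum (g k) n) (Cpsum G n).
Proof.
  intro H. induction n; simpl.
  - assert (Z0 : forall m, Cpsum (fun _ => C0) m = C0) by (induction m; simpl; [auto| rewrite IHm; ring]).
    intros e He. exists O. intros. rewrite Z0. replace (Csub C0 C0) with C0 by ring. rewrite Cmod_C0. lra.
  - apply (Cseries_add (fun k => Cpsum (g k) n) (fun k => g k n)); auto.
Qed.


Lemma trig_periodZ x z : cos (x + 2 * IZR z * PI) = cos x /\ sin (x + 2 * IZR z * PI) = sin x.
Proof.
  assert (Hs : sin (IZR z * PI) = 0) by (apply sin_eq_0_1; exists z; auto).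
  assert (Hc2 : cos (2 * (IZR z * PI)) = 1) by (rewrite cos_2a_sin, Hs; ring).
  assert (Hs2 : sin (2 * (IZR z * PI)) = 0) by (rewrite sin_2a, Hs; ring).
  replace (2 * IZR z * PI) with (2 * (IZR z * PI)) by ring.
  rewrite cos_plus, sin_plus, Hc2, Hs2. split; ring.
Qed.

Lemma Cexpi_periodZ x z : Cexpi (x + 2 * IZR z * PI) = Cexpi x.
Proof. destruct (trig_periodZ x z) as [H1 H2]. unfold Cexpi. rewrite H1, H2. auto. Qed.

Lemma Cpsum_zero u n : (forall j, (j < n)%nat -> u j = C0) -> Cpsum u n = C0.
Proof. induction n; intros H; simpl; auto. rewrite IHn by (intros; apply H; lia). rewrite H by lia. ring. Qed.

Lemma least_nat (P : nat -> Prop) : (exists m, P m) -> exists m, P m /\ forall j, (j < m)%nat -> ~ P j.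
Proof.
  intros [m Hm]. revert Hm. induction m as [m IH] using (well_founded_induction lt_wf). intros Hm.
  destruct (Classical_Prop.classic (exists j, (j < m)%nat /\ P j)) as [[j [Hj Pj]]|Hn].
  - apply (IH j Hj Pj).
  - exists m. split; auto. intros j Hj Pj. apply Hn. exists j; auto.
Qed.

Section Ahat.
Variables (a : nat -> Cplx) (tau : nat -> Z) (eta l : R).
Hypothesis Heta : eta > 0.
Hypothesis Hl : infinite_sum (fun k => Cmod (a k) * exp (eta * Rabs (IZR (tau k)))) l.

Definition Bk k := Cmod (a k) * exp (eta * Rabs (IZR (tau k))).
Definition term y k := Cmul (a k) (Cexpi (- 2 * PI * IZR (tau k) * y)).

Lemma Bk_ge0 k : 0 <= Bk k.
Proof. unfold Bk. apply Rmult_le_pos; [apply Cmod_ge0|left; apply exp_pos]. Qed.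

Lemma l_ge0 : 0 <= l.
Proof. pose proof (Rpsum_le_lim Bk l Bk_ge0 Hl O). simpl in H. auto. Qed.

Lemma term_bound y k : Cmod (term y k) <= Bk k.
Proof.
  unfold term, Bk. rewrite Cmod_mul, Cmod_expi, Rmult_1_r.
  pose proof (Cmod_ge0 (a k)). pose proof (exp_ineq1_le (eta * Rabs (IZR (tau k)))).
  assert (0 <= eta * Rabs (IZR (tau k))) by (apply Rmult_le_pos; [lra|apply Rabs_pos]). nra.
Qed.

Lemma S_ex y : exists L, Cseries (term y) L.
Proof. apply (abs_conv _ Bk l); auto. apply term_bound. Qed.

Definition Sf y : Cplx := proj1_sig (constructive_indefinite_description _ (S_ex y)).
Lemma Sf_spec y : Cseries (term y) (Sf y).
Proof. unfold Sf. destruct (constructive_indefinite_description _ _); auto. Qed.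

Definition rho := 2 * PI / eta.
Lemma rho_pos : 0 < rho.
Proof. unfold rho. apply Rdiv_lt_0_compat; [pose proof PI_RGT_0; lra | lra]. Qed.

Definition coef k m x := Cmul (a k) (Cmul (RtoC ((-2 * PI * IZR (tau k)) ^ m / INR (Factorial.fact m)))
                               (Cexpi (-2 * PI * IZR (tau k) * x + INR m * (PI / 2)))).

Lemma tau_pow_bound k m : Rabs (-2 * PI * IZR (tau k)) ^ m / INR (Factorial.fact m)
                          <= rho ^ m * exp (eta * Rabs (IZR (tau k))).
Proof.
  replace (Rabs (-2 * PI * IZR (tau k))) with (rho * (eta * Rabs (IZR (tau k)))).
  2:{ unfold rho. rewrite !Rabs_mult. rewrite (Rabs_left (-2)) by lra. rewrite (Rabs_right PI) by (pose proof PI_RGT_0; lra). field. lra. }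
  rewrite Rpow_mult_distr. unfold Rdiv. rewrite Rmult_assoc. apply Rmult_le_compat_l.
  apply pow_le. left; apply rho_pos.
  apply term_le_exp. apply Rmult_le_pos; [lra|apply Rabs_pos].
Qed.

Lemma coef_bound k m x : Cmod (coef k m x) <= rho ^ m * Bk k.
Proof.
  unfold coef, Bk. rewrite !Cmod_mul, Cmod_expi, Cmod_RtoC, Rmult_1_r.
  unfold Rdiv. rewrite Rabs_mult, Rabs_inv, <- RPow_abs, (Rabs_right (INR _)) by (apply Rle_ge, pos_INR).
  pose proof (tau_pow_bound k m). pose proof (Cmod_ge0 (a k)).
  apply Rle_trans with (Cmod (a k) * (rho ^ m * exp (eta * Rabs (IZR (tau k))))).
  apply Rmult_le_compat_l; auto. right; ring.
Qed.

Lemma Cm_ex m x : exists L, Cseries (fun k => coef k m x) L.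
Proof.
  apply (abs_conv _ (fun k => rho ^ m * Bk k) (rho ^ m * l)).
  intro k; apply coef_bound. apply infinite_sum_scal; auto.
Qed.

Definition Cm m x : Cplx := proj1_sig (constructive_indefinite_description _ (Cm_ex m x)).
Lemma Cm_spec m x : Cseries (fun k => coef k m x) (Cm m x).
Proof. unfold Cm. destruct (constructive_indefinite_description _ _); auto. Qed.

Lemma Cm_bound m x : Cmod (Cm m x) <= rho ^ m * l.
Proof.
  apply (abs_bound (fun k => coef k m x) (fun k => rho ^ m * Bk k)).
  intro k; apply coef_bound. apply infinite_sum_scal; auto. apply Cm_spec.
Qed.

Lemma term_taylor x h n k :
  Cmod (Csub (term (x + h) k) (Cpsum (fun m => Cmul (RtoC (h ^ m)) (coef k m x)) (S n)))
  <= 2 * (rho * Rabs h) ^ S n * Bk k.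
Proof.
  set (th := -2 * PI * IZR (tau k) * x). set (t := -2 * PI * IZR (tau k) * h).
  assert (E : Csub (term (x + h) k) (Cpsum (fun m => Cmul (RtoC (h ^ m)) (coef k m x)) (S n)) =
              Cmul (a k) (Csub (Cexpi (th + t))
     (Cpsum (fun m => Cmul (RtoC (t ^ m / INR (Factorial.fact m))) (Cexpi (th + INR m * (PI / 2)))) (S n)))).
  { assert (E' : Cpsum (fun m => Cmul (RtoC (h ^ m)) (coef k m x)) (S n) = Cmul (a k)
       (Cpsum (fun m => Cmul (RtoC (t ^ m / INR (Factorial.fact m))) (Cexpi (th + INR m * (PI / 2)))) (S n))).
    { rewrite <- Cpsum_scal. apply Cpsum_ext. intro m. unfold coef. fold th.
      replace (t ^ m / INR (Factorial.fact m)) with (h ^ m * ((-2 * PI * IZR (tau k)) ^ m / INR (Factorial.fact m))).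
      rewrite <- Cmul_RtoC. ring. unfold t. rewrite !Rpow_mult_distr. field. apply INR_fact_neq_0. }
    rewrite E'. unfold term. replace (-2 * PI * IZR (tau k) * (x + h)) with (th + t) by (unfold th, t; ring).
    ring. }
  rewrite E, Cmod_mul. pose proof (expi_taylor th t n). pose proof (Cmod_ge0 (a k)).
  assert (Rabs t ^ S n / INR (Factorial.fact (S n)) <= (rho * Rabs h) ^ S n * exp (eta * Rabs (IZR (tau k)))).
  { replace (Rabs t ^ S n / INR (Factorial.fact (S n))) with
      (Rabs h ^ S n * (Rabs (-2*PI*IZR(tau k)) ^ S n / INR (Factorial.fact (S n)))).
    2:{ unfold t. rewrite (Rabs_mult (-2*PI*IZR(tau k)) h), (Rpow_mult_distr (Rabs (-2*PI*IZR (tau k))) (Rabs h)). field. apply INR_fact_neq_0. }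
    rewrite Rpow_mult_distr. pose proof (tau_pow_bound k (S n)). pose proof (pow_le (Rabs h) (S n) (Rabs_pos h)).
    set (X := Rabs (-2*PI*IZR(tau k)) ^ S n / INR (Factorial.fact (S n))) in *.
    set (Y := rho ^ S n * exp (eta * Rabs (IZR (tau k)))) in *.
    apply Rle_trans with (Rabs h ^ S n * Y). apply Rmult_le_compat_l; auto. unfold Y; right; ring. }
  unfold Bk. assert (0 <= Rabs t ^ S n / INR (Factorial.fact (S n))).
  { apply Rmult_le_pos. apply pow_le, Rabs_pos. left; apply Rinv_0_lt_compat, INR_fact_lt_0. }
  set (X := Cmod (Csub _ _)) in *. nra.
Qed.

Lemma S_taylor x h n :
  Cmod (Csub (Sf (x + h)) (Cpsum (fun m => Cmul (RtoC (h ^ m)) (Cm m x)) (S n)))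
  <= 2 * (rho * Rabs h) ^ S n * l.
Proof.
  assert (HP : Cseries (fun k => Cpsum (fun m => Cmul (RtoC (h ^ m)) (coef k m x)) (S n))
                       (Cpsum (fun m => Cmul (RtoC (h ^ m)) (Cm m x)) (S n))).
  { apply (Cseries_Cpsum (fun k m => Cmul (RtoC (h ^ m)) (coef k m x))). intro m.
    apply Cseries_scal. apply Cm_spec. }
  pose proof (Cseries_sub _ _ _ _ (Sf_spec (x + h)) HP) as HS.
  apply (abs_bound _ (fun k => 2 * (rho * Rabs h) ^ S n * Bk k) _ _ (term_taylor x h n)).
  apply infinite_sum_scal; auto. auto.
Qed.


Lemma Sf_unique y L : Cseries (term y) L -> Sf y = L.
Proof. intro H. apply (Cseries_unique (term y)); auto. apply Sf_spec. Qed.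

Lemma Sf_periodic y z : Sf (y + IZR z) = Sf y.
Proof.
  apply Sf_unique. eapply Cseries_ext; [|apply (Sf_spec y)]. intro k. unfold term.
  replace (-2 * PI * IZR (tau k) * (y + IZR z)) with (-2 * PI * IZR (tau k) * y + 2 * IZR (- (tau k * z)) * PI)
    by (rewrite opp_IZR, mult_IZR; ring).
  rewrite Cexpi_periodZ. auto.
Qed.

Lemma Cm0 x : Cm 0 x = Sf x.
Proof.
  symmetry. apply Sf_unique. eapply Cseries_ext; [|apply (Cm_spec 0 x)]. intro k. unfold coef, term.
  simpl. replace (-2 * PI * IZR (tau k) * x + 0 * (PI / 2)) with (-2 * PI * IZR (tau k) * x) by ring.
  unfold RtoC, Cmul. apply Cplx_eq; simpl; field.
Qed.

Lemma Sf_lip x h : Cmod (Csub (Sf (x + h)) (Sf x)) <= 2 * rho * l * Rabs h.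
Proof.
  pose proof (S_taylor x h 0). simpl Cpsum in H. rewrite Cm0 in H.
  replace (Cadd C0 (Cmul (RtoC 1) (Sf x))) with (Sf x) in H by (unfold RtoC, Cmul, Cadd, C0; ceq).
  replace (2 * (rho * Rabs h) ^ 1 * l) with (2 * rho * l * Rabs h) in H by ring. auto.
Qed.

Lemma dich_A x : (forall m, Cm m x = C0) -> forall h, rho * Rabs h < 1 -> Sf (x + h) = C0.
Proof.
  intros HA h Hh. apply Cmod_eq0. pose proof (Cmod_ge0 (Sf (x + h))).
  destruct (Rle_lt_or_eq_dec _ _ H) as [Hp|]; auto. exfalso.
  assert (Hr : Rabs (rho * Rabs h) < 1) by (rewrite Rabs_right; auto; apply Rle_ge, Rmult_le_pos; [left; apply rho_pos|apply Rabs_pos]).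
  destruct (pow_lt_1_zero _ Hr (Cmod (Sf (x + h)) / (2 * l + 1))) as [N HN].
  { apply Rdiv_lt_0_compat; auto. pose proof l_ge0; lra. }
  specialize (HN (S N) ltac:(lia)). pose proof (S_taylor x h N).
  rewrite Cpsum_zero in H0 by (intros j _; rewrite HA; unfold Cmul, RtoC, C0; ceq).
  replace (Csub (Sf (x + h)) C0) with (Sf (x + h)) in H0 by ring.
  rewrite Rabs_right in HN by (apply Rle_ge, pow_le, Rmult_le_pos; [left; apply rho_pos|apply Rabs_pos]).
  pose proof l_ge0. set (p := (rho * Rabs h) ^ S N) in *.
  assert (0 <= p) by (apply pow_le, Rmult_le_pos; [left; apply rho_pos|apply Rabs_pos]).
  apply Rmult_lt_compat_r with (r := 2 * l + 1) in HN; [|lra].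
  replace (Cmod (Sf (x + h)) / (2 * l + 1) * (2 * l + 1)) with (Cmod (Sf (x + h))) in HN by (field; lra).
  nra.
Qed.

Lemma dich_B x m0 : Cm m0 x <> C0 -> (forall j, (j < m0)%nat -> Cm j x = C0) ->
  exists eps, eps > 0 /\ forall h, 0 < Rabs h < eps -> Sf (x + h) <> C0.
Proof.
  intros Hm Hj. set (c := Cmod (Cm m0 x)).
  assert (Hc : 0 < c). { pose proof (Cmod_ge0 (Cm m0 x)). destruct (Rle_lt_or_eq_dec _ _ H); auto.
    exfalso; apply Hm, Cmod_eq0; auto. }
  set (D := 2 * rho ^ S m0 * l).
  assert (HD : 0 <= D) by (unfold D; pose proof l_ge0; pose proof (pow_le rho (S m0) (Rlt_le _ _ rho_pos)); nra).
  exists (c / (D + 1)). split. apply Rdiv_lt_0_compat; lra.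
  intros h [Hh1 Hh2] HS. pose proof (S_taylor x h m0).
  simpl Cpsum in H. rewrite Cpsum_zero in H by (intros j Hj'; rewrite Hj; auto; unfold Cmul, RtoC, C0; ceq).
  rewrite HS in H. replace (Csub C0 (Cadd C0 (Cmul (RtoC (h ^ m0)) (Cm m0 x)))) with (Copp' (Cmul (RtoC (h ^ m0)) (Cm m0 x))) in H by ring.
  rewrite Cmod_opp, Cmod_mul, Cmod_RtoC in H. fold c in H.
  rewrite <- RPow_abs in H. rewrite Rpow_mult_distr in H. simpl (Rabs h ^ S m0) in H.
  assert (Hp : 0 < Rabs h ^ m0) by (apply pow_lt; lra).
  assert (D * Rabs h < c).
  { apply Rmult_lt_compat_l with (r := D + 1) in Hh2; [|lra].
    replace ((D + 1) * (c / (D + 1))) with c in Hh2 by (field; lra). nra. }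
  unfold D in H0. replace (2 * (rho ^ S m0 * (Rabs h * Rabs h ^ m0)) * l) with (Rabs h ^ m0 * (2 * rho ^ S m0 * l * Rabs h)) in H by ring.
  nra.
Qed.

Definition PA x := forall m, Cm m x = C0.

Lemma PA_step x d : PA x -> Rabs d <= / rho / 2 -> PA (x + d).
Proof.
  intros HA Hd. destruct (Classical_Prop.classic (PA (x + d))) as [|Hn]; auto. exfalso.
  assert (exists m, Cm m (x + d) <> C0). { apply Classical_Pred_Type.not_all_ex_not in Hn. auto. }
  destruct (least_nat _ H) as [m0 [Hm0 Hl0]].
  destruct (dich_B (x + d) m0 Hm0) as [eps [He Hb]].
  { intros j Hj. apply Classical_Prop.NNPP. intro; apply (Hl0 j Hj); auto. }
  set (h := Rmin eps (/ rho / 2) / 2).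
  assert (Hr : 0 < / rho / 2) by (pose proof rho_pos; apply Rdiv_lt_0_compat; [apply Rinv_0_lt_compat|]; lra).
  assert (Hh : 0 < h) by (unfold h; apply Rdiv_lt_0_compat; [apply Rmin_pos|]; lra).
  assert (Hh2 : h < eps) by (unfold h; pose proof (Rmin_l eps (/ rho / 2)); lra).
  assert (Hh3 : h <= / rho / 4) by (unfold h; pose proof (Rmin_r eps (/ rho / 2)); lra).
  apply (Hb h). rewrite Rabs_right; lra.
  replace (x + d + h) with (x + (d + h)) by ring. apply dich_A; auto.
  pose proof rho_pos. pose proof (Rabs_triang d h). rewrite (Rabs_right h) in H1 by lra.
  apply Rle_lt_trans with (rho * (/ rho / 2 + / rho / 4)).
  apply Rmult_le_compat_l; lra. field_simplify; lra.
Qed.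

Lemma PA_false : Sf 0 <> C0 -> forall x, ~ PA x.
Proof.
  intros H0 x HA. pose proof rho_pos.
  assert (Hr : 0 < / rho / 2) by (apply Rdiv_lt_0_compat; [apply Rinv_0_lt_compat|]; lra).
  destruct (INR_archimed (/ rho / 2) (Rabs x) Hr) as [N HN].
  revert x HA HN. induction N; intros x HA HN.
  - simpl in HN. pose proof (Rabs_pos x). lra.
  - destruct (Rlt_or_le (rho * Rabs x) 1) as [Hx|Hx].
    + apply H0. replace 0 with (x + - x) by ring. apply dich_A; auto. rewrite Rabs_Ropp; auto.
    + assert (Hxr : / rho <= Rabs x).
      { apply Rmult_le_compat_l with (r := / rho) in Hx; [|left; apply Rinv_0_lt_compat; lra].
        rewrite <- Rmult_assoc, Rinv_l, Rmult_1_l, Rmult_1_r in Hx; lra. }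
      destruct (Rle_or_lt 0 x) as [Hp|Hn].
      * apply (IHN (x + - (/ rho / 2))). apply PA_step; auto. rewrite Rabs_Ropp, Rabs_right; lra.
        rewrite Rabs_right in * by lra. rewrite S_INR in HN. rewrite Rabs_right. lra.
        apply Rle_ge. assert (0 < / rho) by (apply Rinv_0_lt_compat; lra). lra.
      * apply (IHN (x + (/ rho / 2))). apply PA_step; auto. rewrite Rabs_right; lra.
        rewrite Rabs_left in * by lra. rewrite S_INR in HN. rewrite Rabs_left1. lra.
        assert (0 < / rho) by (apply Rinv_0_lt_compat; lra). lra.
Qed.

Lemma nonaccum : Sf 0 <> C0 -> forall x, exists eps, eps > 0 /\ forall h, 0 < Rabs h < eps -> Sf (x + h) <> C0.
Proof.
  intros H0 x. pose proof (PA_false H0 x) as Hn. unfold PA in Hn.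
  apply Classical_Pred_Type.not_all_ex_not in Hn.
  destruct (least_nat _ Hn) as [m0 [Hm0 Hl0]]. apply (dich_B x m0 Hm0).
  intros j Hj. apply Classical_Prop.NNPP. intro; apply (Hl0 j Hj); auto.
Qed.

Lemma zeros_fin01 : Sf 0 <> C0 -> exists Zl : list R, forall y, 0 <= y <= 1 -> Sf y = C0 -> In y Zl.
Proof.
  intros H0.
  set (E := fun t => 0 <= t <= 1 /\ exists Zl : list R, forall y, 0 <= y <= t -> Sf y = C0 -> In y Zl).
  assert (HE0 : E 0). { split; [lra|]. exists (0 :: nil). intros y Hy _. left; lra. }
  assert (Hb : bound E) by (exists 1; intros t [Ht _]; lra).
  destruct (completeness E Hb (ex_intro _ 0 HE0)) as [T [HT1 HT2]].
  assert (HT0 : 0 <= T) by (apply HT1; auto).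
  assert (HT1' : T <= 1) by (apply HT2; intros t [Ht _]; lra).
  destruct (nonaccum H0 T) as [eps [He Hna]].
  assert (Ht : exists t, E t /\ T - eps < t).
  { apply Classical_Prop.NNPP. intro Hn.
    assert (T <= T - eps). { apply HT2. intros t Et. apply Rnot_lt_le. intro; apply Hn; exists t; auto. } lra. }
  destruct Ht as [t [[Ht01 [Zl HZl]] Htt]].
  assert (Ht'E : E (Rmin 1 (T + eps / 2))).
  { split. split. apply Rmin_glb; lra. apply Rmin_l.
    exists (T :: Zl). intros y Hy Hz.
    destruct (Rle_or_lt y t) as [Hyt|Hyt]. right; apply HZl; auto; lra.
    left. destruct (Req_dec y T) as [|Hne]; auto. exfalso.
    apply (Hna (y - T)). split. apply Rabs_pos_lt; lra.
    pose proof (Rmin_r 1 (T + eps / 2)).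
    assert (HtT : t <= T) by (apply HT1; split; auto; exists Zl; auto).
    apply Rabs_def1; lra.
    replace (T + (y - T)) with y by ring. auto. }
  assert (Rmin 1 (T + eps / 2) <= T) by (apply HT1; auto).
  assert (Rmin 1 (T + eps / 2) = 1).
  { unfold Rmin in *. destruct (Rle_dec 1 (T + eps / 2)); auto. lra. }
  rewrite H1 in Ht'E. destruct Ht'E as [_ [Zl' HZl']]. exists Zl'. intros y Hy. apply HZl'; auto.
Qed.

Lemma zeros_mod1 : Sf 0 <> C0 -> exists Zl : list R, forall y, Sf y = C0 -> exists z m, In z Zl /\ y = z + IZR m.
Proof.
  intros H0. destruct (zeros_fin01 H0) as [Zl HZ]. exists Zl. intros y Hy.
  destruct (archimed y) as [H1 H2].
  exists (y - IZR (up y - 1)), (up y - 1)%Z. split; [|ring].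
  apply HZ. rewrite minus_IZR. lra.
  replace (y - IZR (up y - 1)) with (y + IZR (- (up y - 1))) by (rewrite opp_IZR; ring).
  rewrite Sf_periodic. auto.
Qed.

End Ahat.


Fixpoint evalm (l : list Cplx) (x : Cplx) : Cplx :=
  match l with nil => Cone | c :: l' => Cadd c (Cmul x (evalm l' x)) end.

Module FTAm.
Import ssreflect ssrbool ssrfun eqtype ssrnat seq fintype bigop ssralg ssrnum Rstruct complex.
Import GRing.Theory.
Local Open Scope ring_scope.
Local Open Scope complex_scope.

Definition toc (z : Cplx) : R[i] := (Defs.Re z +i* Defs.Im z).
Definition ofc (w : R[i]) : Cplx := mkC (complex.Re w) (complex.Im w).

Lemma ofc_toc z : ofc (toc z) = z.
Proof. by case: z. Qed.

Lemma ofc_add x y : ofc (x + y) = Cadd (ofc x) (ofc y).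
Proof. case: x => a b; case: y => c d. reflexivity. Qed.

Lemma ofc_mul x y : ofc (x * y) = Cmul (ofc x) (ofc y).
Proof. case: x => a b; case: y => c d. rewrite /ofc /Cmul /=. apply: Cplx_eq => /=.
  all: reflexivity. Qed.

Lemma ofc_one : ofc 1 = Cone.
Proof. reflexivity. Qed.
Lemma ofc_zero : ofc 0 = C0.
Proof. reflexivity. Qed.

Definition evalmc (l : seq R[i]) (x : R[i]) := foldr (fun c acc => c + x * acc) 1 l.

Lemma evalmcE l x : evalmc l x = x ^+ size l + \sum_(i < size l) l`_i * x ^+ i.
Proof.
  elim: l => [|c l IH] /=; first by rewrite big_ord0 expr0 addr0.
  rewrite IH big_ord_recl /= expr0 mulr1 mulrDr exprS mulr_sumr addrCA.
  congr (_ + _). congr (_ + _). apply: eq_bigr => i _. by rewrite /bump /= add0n add1n exprS mulrCA.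
Qed.

Lemma fta_m l : (0 < size l)%N -> exists x, evalmc l x = 0.
Proof.
  move=> Hl. have [x Hx] := complex_acf_axiom (fun i => - l`_i) Hl.
  exists x. rewrite evalmcE Hx -big_split /=. apply: big1 => i _. by rewrite mulNr addNr.
Qed.

Lemma ofc_evalm l x : ofc (evalmc (map toc l) x) = evalm l (ofc x).
Proof.
  elim: l => [|c l IH] /=; first exact: ofc_one.
  by rewrite ofc_add ofc_mul IH ofc_toc.
Qed.

Lemma FTA_Cplx (l : list Cplx) : l <> nil -> exists z, evalm l z = C0.
Proof.
  move=> Hl. have [x Hx] : exists x, evalmc (map toc l) x = 0.
    apply: fta_m. rewrite size_map. by case: l Hl.
  exists (ofc x). by rewrite -ofc_evalm Hx.
Qed.
End FTAm.


Fixpoint papp (l : list Cplx) (w : nat -> Cplx) (n : nat) : Cplx :=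
  match l with nil => w n | c :: l' => Cadd (Cmul c (w n)) (papp l' w (S n)) end.

Fixpoint sdiv (z : Cplx) (l : list Cplx) : list Cplx :=
  match l with
  | nil => nil
  | c :: l' => match l' with nil => nil | _ => evalm l' z :: sdiv z l' end
  end.

Fixpoint evald (l : list Cplx) (x : Cplx) : Cplx :=
  match l with nil => C0 | c :: l' => Cadd (evalm l' x) (Cmul x (evald l' x)) end.

Lemma sdiv_eval l z x : l <> nil -> evalm l x = Cadd (evalm l z) (Cmul (Csub x z) (evalm (sdiv z l) x)).
Proof.
  induction l as [|c l IH]; intros H; [congruence|].
  destruct l as [|c' l''].
  - simpl. unfold Cone, RtoC, Cadd, Cmul, Csub. ceq.
  - change (sdiv z (c :: c' :: l'')) with (evalm (c' :: l'') z :: sdiv z (c' :: l'')).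
    change (evalm (c :: c' :: l'') x) with (Cadd c (Cmul x (evalm (c' :: l'') x))).
    change (evalm (c :: c' :: l'') z) with (Cadd c (Cmul z (evalm (c' :: l'') z))).
    rewrite (IH ltac:(discriminate)). cbn [evalm]. ring.
Qed.

Lemma sdiv_papp l z w n : l <> nil ->
  papp l w n = Cadd (Cmul (evalm l z) (w n)) (papp (sdiv z l) (fun k => Csub (w (S k)) (Cmul z (w k))) n).
Proof.
  revert n. induction l as [|c l IH]; intros n H; [congruence|].
  destruct l as [|c' l''].
  - simpl. unfold Cone, RtoC, Cadd, Cmul, Csub. ceq.
  - change (sdiv z (c :: c' :: l'')) with (evalm (c' :: l'') z :: sdiv z (c' :: l'')).
    change (papp (c :: c' :: l'') w n) with (Cadd (Cmul c (w n)) (papp (c' :: l'') w (S n))).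
    rewrite (IH (S n) ltac:(discriminate)). cbn [papp evalm]. ring.
Qed.

Lemma sdiv_length z l : length (sdiv z l) = pred (length l).
Proof. induction l as [|c l IH]; simpl; auto. destruct l; simpl in *; auto. Qed.

Lemma sdiv_deriv l z : l <> nil -> evalm (sdiv z l) z = evald l z.
Proof.
  induction l as [|c l IH]; intros H; [congruence|].
  destruct l as [|c' l''].
  - simpl. unfold Cone, RtoC, Cadd, Cmul, C0. ceq.
  - change (sdiv z (c :: c' :: l'')) with (evalm (c' :: l'') z :: sdiv z (c' :: l'')).
    change (evalm (evalm (c' :: l'') z :: sdiv z (c' :: l'')) z) with
      (Cadd (evalm (c' :: l'') z) (Cmul z (evalm (sdiv z (c' :: l'')) z))).
    rewrite (IH ltac:(discriminate)). reflexivity.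
Qed.

Lemma geom_step (z K' th' : R) (w : nat -> Cplx) (zc : Cplx) :
  Cmod zc < 1 -> 0 <= th' < 1 -> 0 <= K' ->
  (forall k, Cmod (Csub (w (S k)) (Cmul zc (w k))) <= K' * th' ^ k) ->
  exists K th, 0 <= th < 1 /\ 0 <= K /\ forall k, Cmod (w k) <= K * th ^ k.
Proof.
  intros Hz Hth HK Hw. set (c := Cmod zc). pose proof (Cmod_ge0 zc).
  set (th := Rmax ((c + 1) / 2) th').
  assert (Hth1 : (c + 1) / 2 <= th) by apply Rmax_l.
  assert (Hth2 : th' <= th) by apply Rmax_r.
  assert (Hth3 : th < 1) by (unfold th, Rmax; destruct (Rle_dec _ _); unfold c in *; lra).
  set (K := Rmax (Cmod (w O)) (K' / (th - c))).
  assert (HK1 : Cmod (w O) <= K) by apply Rmax_l.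
  assert (HK2 : K' / (th - c) <= K) by apply Rmax_r.
  assert (Hd : 0 < th - c) by (unfold c in *; lra).
  exists K, th. split; [unfold c in *; lra|]. split. pose proof (Cmod_ge0 (w O)); lra.
  induction k.
  - simpl; lra.
  - replace (w (S k)) with (Cadd (Cmul zc (w k)) (Csub (w (S k)) (Cmul zc (w k)))) by ring.
    eapply Rle_trans; [apply Cmod_triangle|]. rewrite Cmod_mul. fold c.
    specialize (Hw k). assert (th' ^ k <= th ^ k) by (apply pow_incr; lra).
    assert (K' <= K * (th - c)).
    { apply Rmult_le_compat_r with (r := th - c) in HK2; [|lra].
      replace (K' / (th - c) * (th - c)) with K' in HK2 by (field; lra). lra. }
    assert (0 <= th ^ k) by (apply pow_le; unfold c in *; lra).
    assert (c * Cmod (w k) <= c * (K * th ^ k)) by (apply Rmult_le_compat_l; auto).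
    simpl. nra.
Qed.

Lemma decay n : forall l, length l = n -> (forall x, evalm l x = C0 -> Cmod x < 1) ->
  forall w, (forall k, papp l w k = C0) ->
  exists K th, 0 <= th < 1 /\ 0 <= K /\ forall k, Cmod (w k) <= K * th ^ k.
Proof.
  induction n; intros l Hlen Hroots w Hw.
  - destruct l; [|discriminate]. exists 0, 0. split; [lra|]. split; [lra|].
    intro k. simpl in Hw. rewrite Hw, Cmod_C0. lra.
  - assert (Hl : l <> nil) by (intro; subst; discriminate).
    destruct (FTAm.FTA_Cplx l Hl) as [z Hz].
    assert (Hzm : Cmod z < 1) by auto.
    set (w' := fun k => Csub (w (S k)) (Cmul z (w k))).
    destruct (IHn (sdiv z l)) with (w := w') as [K' [th' [Hth' [HK' Hb]]]].
    + rewrite sdiv_length, Hlen. auto.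
    + intros x Hx. apply Hroots. rewrite (sdiv_eval l z x Hl), Hz, Hx. ring.
    + intro k. pose proof (sdiv_papp l z w k Hl). rewrite Hw, Hz in H. fold w' in H.
      replace (papp (sdiv z l) w' k) with (Csub (Cadd (Cmul C0 (w k)) (papp (sdiv z l) w' k)) (Cmul C0 (w k))) by ring.
      rewrite <- H. unfold C0, RtoC, Cmul, Csub. ceq.
    + apply (geom_step 0 K' th' w z); auto.
Qed.


Fixpoint ZevalR (P : list Z) (x : R) : R :=
  match P with nil => 0 | c :: P' => IZR c + x * ZevalR P' x end.

Lemma Zpoly_evalC_R P x : Zpoly_evalC P (RtoC x) = RtoC (ZevalR P x).
Proof. induction P; simpl; [auto|]. rewrite IHP. unfold Cadd, Cmul, RtoC; ceq. Qed.

Lemma Q2R_inject_Z c : Q2R (inject_Z c) = IZR c.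
Proof. unfold Q2R, inject_Z; simpl. field. Qed.

Lemma Qpoly_Z P x : Qpoly_evalR (map inject_Z P) x = ZevalR P x.
Proof. induction P; simpl; auto. rewrite IHP, Q2R_inject_Z. auto. Qed.

Definition CZ (c : Z) : Cplx := RtoC (IZR c).

Lemma evalm_Z l x : evalm (map CZ l) x = Zpoly_evalC (l ++ 1%Z :: nil) x.
Proof. induction l; simpl. unfold Cone, RtoC, Cadd, Cmul, C0; ceq. rewrite IHl. auto. Qed.

Fixpoint derR (P : list Z) (x : R) : R :=
  match P with nil => 0 | c :: P' => ZevalR P' x + x * derR P' x end.

Fixpoint dq (k : nat) (l : list Z) : list Z :=
  match l with nil => nil | c :: l' => (Z.of_nat k * c)%Z :: dq (S k) l' end.

Lemma dq_eval l x : forall k, ZevalR (dq (S k) l) x = INR k * ZevalR l x + derR (0%Z :: l) x.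
Proof.
  induction l as [|c l IH]; intro k; cbn [dq ZevalR derR]. ring.
  rewrite IH. rewrite mult_IZR, <- INR_IZR_INZ. cbn [derR ZevalR]. rewrite !S_INR. ring.
Qed.

Lemma nth_dq l : forall k i, nth i (dq k l) 0%Z = (Z.of_nat (k + i) * nth i l 0)%Z.
Proof.
  induction l as [|c l IH]; intros k i; destruct i; simpl; auto; try lia.
  rewrite IH. f_equal. f_equal. lia.
Qed.

Lemma length_dq l : forall k, length (dq k l) = length l.
Proof. induction l; simpl; auto. Qed.

Lemma evald_Z l x : evald (map CZ l) (RtoC x) = RtoC (derR (l ++ 1%Z :: nil) x).
Proof.
  induction l; simpl. unfold C0, RtoC; ceq.
  rewrite IHl, evalm_Z, Zpoly_evalC_R. unfold Cadd, Cmul, RtoC; ceq.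
Qed.

Fixpoint pappZ (l : list Z) (u : nat -> Z) (n : nat) : Z :=
  match l with nil => u n | c :: l' => (c * u n + pappZ l' u (S n))%Z end.

Lemma papp_Z l u n : papp (map CZ l) (fun k => CZ (u k)) n = CZ (pappZ l u n).
Proof.
  revert n; induction l; intro n; simpl; auto. rewrite IHl. unfold CZ, Cadd, Cmul, RtoC.
  rewrite plus_IZR, mult_IZR. ceq.
Qed.

Lemma pappZ_zero_tail l u n : (forall m, (n <= m)%nat -> u m = 0%Z) -> pappZ l u n = 0%Z.
Proof.
  revert n; induction l; intros n H; simpl. apply H; lia.
  rewrite H by lia. rewrite IHl by (intros; apply H; lia). lia.
Qed.

Lemma pappZ_zero c0 l u : c0 <> 0%Z -> (forall n, pappZ (c0 :: l) u n = 0%Z) ->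
  (exists N, forall n, (N <= n)%nat -> u n = 0%Z) -> forall n, u n = 0%Z.
Proof.
  intros Hc Hp [N HN].
  assert (forall j n, (N - j <= n)%nat -> u n = 0%Z).
  { induction j; intros n Hn. apply HN; lia.
    destruct (Nat.le_gt_cases (N - j) n). apply IHj; auto.
    specialize (Hp n). simpl in Hp. rewrite (pappZ_zero_tail l u (S n)) in Hp.
    2: { intros; apply IHj; lia. }
    assert (c0 * u n = 0)%Z by lia. apply Z.mul_eq_0 in H0. destruct H0; [congruence|auto]. }
  intro n. apply (H N n). lia.
Qed.

Lemma pappZ_lin l u v p q n : pappZ l (fun k => (p * u k + q * v k)%Z) n = (p * pappZ l u n + q * pappZ l v n)%Z.
Proof. revert n; induction l; intro n; simpl; auto. rewrite IHl. ring. Qed.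

Lemma pappZ_shift l u m n : pappZ l (fun k => u (k + m)%nat) n = pappZ l u (n + m).
Proof. revert n; induction l; intro n; simpl; auto. rewrite IHl. auto. Qed.

Lemma int_small_zero (z : Z) : Rabs (IZR z) < 1 -> z = 0%Z.
Proof.
  intro H. apply Rabs_def2 in H. destruct H. apply Z.le_antisymm.
  apply Z.lt_succ_r. apply lt_IZR. simpl. lra. apply Z.lt_pred_le. apply lt_IZR. simpl. lra.
Qed.

Lemma decay_int_zero (u : nat -> Z) K th : 0 <= th < 1 -> 0 <= K -> (forall n, Rabs (IZR (u n)) <= K * th ^ n) ->
  exists N, forall n, (N <= n)%nat -> u n = 0%Z.
Proof.
  intros Hth HK Hb. assert (Hr : Rabs th < 1) by (rewrite Rabs_right; lra).
  destruct (pow_lt_1_zero th Hr (/ (K + 1))) as [N HN]. apply Rinv_0_lt_compat; lra.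
  exists N. intros n Hn. apply int_small_zero. specialize (HN n Hn). specialize (Hb n).
  rewrite Rabs_right in HN by (apply Rle_ge, pow_le; lra).
  apply Rle_lt_trans with (K * th ^ n); auto.
  apply Rmult_lt_compat_l with (r := K + 1) in HN; [|lra]. rewrite Rinv_r in HN by lra.
  assert (0 <= th ^ n) by (apply pow_le; lra). nra.
Qed.

Lemma geom_cauchy (r : nat -> R) M rh : 0 <= rh < 1 -> 0 <= M ->
  (forall n, Rabs (r (S n) - r n) <= M * rh ^ n) ->
  exists c, forall n, Rabs (c - r n) <= M * rh ^ n / (1 - rh).
Proof.
  intros Hrh HM Hs.
  assert (Htel : forall n j, Rabs (r (j + n)%nat - r n) <= M * rh ^ n * (1 - rh ^ j) / (1 - rh)).
  { intros n j. induction j. simpl. rewrite Rminus_diag, Rabs_R0. replace (1 - 1) with 0 by ring. unfold Rdiv. lra.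
    replace (r (S j + n)%nat - r n) with ((r (S (j + n)) - r (j + n)%nat) + (r (j + n)%nat - r n)) by (simpl; ring).
    eapply Rle_trans; [apply Rabs_triang|]. specialize (Hs (j + n)%nat).
    rewrite pow_add in Hs. simpl pow.
    replace (M * rh ^ n * (1 - rh * rh ^ j) / (1 - rh)) with (M * rh ^ n * (1 - rh ^ j) / (1 - rh) + M * (rh ^ j * rh ^ n)) by (field; lra).
    lra. }
  assert (Hb : forall n j, Rabs (r (j + n)%nat - r n) <= M * rh ^ n / (1 - rh)).
  { intros n j. eapply Rle_trans; [apply Htel|]. unfold Rdiv. apply Rmult_le_compat_r. left; apply Rinv_0_lt_compat; lra.
    assert (0 <= rh ^ j) by (apply pow_le; lra). assert (0 <= M * rh ^ n) by (apply Rmult_le_pos; [lra|apply pow_le; lra]). nra. }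
  assert (Hc : Cauchy_crit r).
  { intros eps He. assert (Hr : Rabs rh < 1) by (rewrite Rabs_right; lra).
    destruct (pow_lt_1_zero rh Hr (eps * (1 - rh) / (M + 1))) as [N HN].
    { apply Rdiv_lt_0_compat; [apply Rmult_lt_0_compat|]; lra. }
    exists N. intros n m Hn Hm. unfold R_dist.
    assert (Hgen : forall a b, (N <= a)%nat -> (a <= b)%nat -> Rabs (r b - r a) < eps).
    { intros a b Ha Hab. replace b with ((b - a) + a)%nat by lia.
      eapply Rle_lt_trans; [apply Hb|]. specialize (HN a Ha). rewrite Rabs_right in HN by (apply Rle_ge, pow_le; lra).
      apply Rmult_lt_compat_l with (r := M + 1) in HN; [|lra].
      replace ((M + 1) * (eps * (1 - rh) / (M + 1))) with (eps * (1 - rh)) in HN by (field; lra).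
      apply Rmult_lt_reg_r with (r := 1 - rh). lra. unfold Rdiv. rewrite Rmult_assoc, Rinv_l by lra.
      assert (0 <= rh ^ a) by (apply pow_le; lra). nra. }
    destruct (Nat.le_gt_cases n m). rewrite Rabs_minus_sym. apply Hgen; auto. apply Hgen; auto; lia. }
  destruct (R_complete r Hc) as [c Hcv]. exists c. intro n.
  apply Rnot_lt_le. intro H. set (g := Rabs (c - r n) - M * rh ^ n / (1 - rh)).
  destruct (Hcv g) as [N HN]. unfold g; lra.
  specialize (HN (N + n)%nat ltac:(lia)). specialize (Hb n N). unfold R_dist in HN.
  pose proof (Rabs_triang (c - r (N + n)%nat) (r (N + n)%nat - r n)).
  replace (c - r (N + n)%nat + (r (N + n)%nat - r n)) with (c - r n) in H0 by ring.
  rewrite Rabs_minus_sym in HN. unfold g in HN. lra.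
Qed.


Fixpoint dotZ (l s : list Z) : Z :=
  match l, s with c :: l', x :: s' => (c * x + dotZ l' s')%Z | _, _ => 0%Z end.

Lemma pappZ_dot u l : forall s n, length s = length l -> (forall i, (i < length l)%nat -> nth i s 0%Z = u (n + i)%nat) ->
  pappZ l u n = (dotZ l s + u (n + length l)%nat)%Z.
Proof.
  induction l as [|c l IH]; intros s n Hs Hn; simpl. rewrite Nat.add_0_r. auto.
  destruct s as [|x s]; [discriminate|]. simpl in Hs.
  rewrite (IH s (S n)); auto.
  - specialize (Hn O ltac:(simpl; lia)). simpl in Hn. rewrite Nat.add_0_r in Hn. subst x.
    replace (S n + length l)%nat with (n + S (length l))%nat by lia. ring.
  - intros i Hi. specialize (Hn (S i) ltac:(simpl; lia)). simpl in Hn. rewrite Hn. f_equal. lia.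
Qed.

Lemma RtoC_eq0 x : RtoC x = C0 -> x = 0.
Proof. intro H. unfold RtoC, C0 in H. injection H. auto. Qed.

Lemma Cmod_CZ z : Cmod (CZ z) = Rabs (IZR z).
Proof. apply Cmod_RtoC. Qed.

Lemma Rdiv_nonneg a b : 0 <= a -> 0 < b -> 0 <= a / b.
Proof. intros. unfold Rdiv. apply Rmult_le_pos; auto. left; apply Rinv_0_lt_compat; auto. Qed.

Lemma pow_le_one x n : 0 <= x <= 1 -> x ^ n <= 1.
Proof. intro H. induction n; simpl; [lra|]. pose proof (pow_le x n (proj1 H)). nra. Qed.

Lemma pow_decr x m n : 0 <= x <= 1 -> (m <= n)%nat -> x ^ n <= x ^ m.
Proof.
  intros H Hmn. replace n with (m + (n - m))%nat by lia. rewrite pow_add.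
  pose proof (pow_le x m (proj1 H)). pose proof (pow_le_one x (n - m) H). nra.
Qed.

Section PV.
Variables (alpha : R) (d : nat) (P : list Z).
Hypothesis Hd : (2 <= d)%nat.
Hypothesis Hlen : length P = S d.
Hypothesis Hlead : nth d P 0%Z = 1%Z.
Hypothesis Hroot : Zpoly_evalC P (RtoC alpha) = C0.
Hypothesis Hmin : forall Qp : list Q, (length Qp <= d)%nat -> Qpoly_evalR Qp alpha = 0 ->
     forall i, Qeq (nth i Qp 0%Q) 0%Q.
Hypothesis Hconj : forall z : Cplx, Zpoly_evalC P z = C0 -> z <> RtoC alpha -> Cmod z < 1.

Definition l0 := firstn d P.

Lemma l0_len : length l0 = d.
Proof. unfold l0. apply firstn_length_le. lia. Qed.

Lemma P_split : P = l0 ++ 1%Z :: nil.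
Proof.
  pose proof (firstn_skipn d P) as E. unfold l0.
  assert (Hs : length (skipn d P) = 1%nat) by (rewrite length_skipn; lia).
  destruct (skipn d P) as [|x [|y r]] eqn:Es; simpl in Hs; try lia.
  assert (x = 1%Z).
  { rewrite <- Hlead, <- E. rewrite app_nth2; rewrite firstn_length_le by lia. replace (d - d)%nat with O by lia. auto. lia. }
  subst x. auto.
Qed.

Lemma ZevalP : ZevalR P alpha = 0.
Proof. apply RtoC_eq0. rewrite <- Zpoly_evalC_R. auto. Qed.

Lemma minZ L : (length L <= d)%nat -> ZevalR L alpha = 0 -> forall i, nth i L 0%Z = 0%Z.
Proof.
  intros HL HZ i. pose proof (Hmin (map inject_Z L)) as H.
  rewrite length_map, Qpoly_Z in H. specialize (H HL HZ i).
  change 0%Q with (inject_Z 0) in H. rewrite map_nth in H. unfold Qeq in H. simpl in H. lia.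
Qed.

Lemma alpha_irr p q : q <> 0%Z -> IZR q * alpha <> IZR p.
Proof.
  intros Hq E. pose proof (minZ ((- p)%Z :: q :: nil)) as H. simpl in H.
  specialize (H ltac:(lia)). rewrite opp_IZR in H. specialize (H ltac:(lra) 1%nat). simpl in H. auto.
Qed.

Lemma alpha_nz : alpha <> 0.
Proof. intro E. apply (alpha_irr 0 1); [lia|]. rewrite E. simpl. ring. Qed.

Definition lc := map CZ l0.

Lemma lc_eval x : evalm lc x = Zpoly_evalC P x.
Proof. unfold lc. rewrite evalm_Z, <- P_split. auto. Qed.

Lemma lc_nnil : lc <> nil.
Proof. unfold lc. intro E. apply (f_equal (@length _)) in E. rewrite length_map, l0_len in E. simpl in E. lia. Qed.

Lemma head_nz : exists c0 l', l0 = c0 :: l' /\ c0 <> 0%Z.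
Proof.
  destruct l0 as [|c0 l'] eqn:E. pose proof l0_len. rewrite E in H. simpl in H. lia.
  exists c0, l'. split; auto. intro Hc. subst c0.
  pose proof ZevalP as HP. rewrite P_split, E in HP. simpl in HP.
  assert (ZevalR (l' ++ 1%Z :: nil) alpha = 0).
  { assert (alpha * ZevalR (l' ++ 1%Z :: nil) alpha = 0) by lra.
    apply Rmult_integral in H. destruct H; auto. exfalso; apply alpha_nz; auto. }
  pose proof (minZ (l' ++ 1%Z :: nil)) as Hm.
  assert (Hl' : length l' = pred d) by (pose proof l0_len; rewrite E in H0; simpl in H0; lia).
  rewrite length_app, Hl' in Hm. simpl in Hm. specialize (Hm ltac:(lia) H (length l')).
  rewrite nth_middle in Hm. discriminate.
Qed.

Lemma sep : evald lc (RtoC alpha) <> C0.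
Proof.
  unfold lc. rewrite evald_Z, <- P_split. intro E. apply RtoC_eq0 in E.
  assert (HPc : exists c Pt, P = c :: Pt) by (destruct P as [|c Pt]; [simpl in Hlen; lia| exists c, Pt; auto]).
  destruct HPc as [c [Pt EP]]. rewrite EP in E.
  assert (HlPt : length Pt = d) by (rewrite EP in Hlen; simpl in Hlen; lia).
  pose proof (minZ (dq 1 Pt)) as Hm. rewrite length_dq in Hm.
  specialize (Hm ltac:(lia)).
  rewrite dq_eval in Hm. simpl INR in Hm. simpl derR in Hm. simpl derR in E.
  specialize (Hm ltac:(lra) (pred d)). rewrite nth_dq in Hm.
  replace (nth (pred d) Pt 0%Z) with 1%Z in Hm. lia.
  rewrite <- Hlead, EP. destruct d; [lia|]. simpl. auto.
Qed.

Definition Qp := sdiv (RtoC alpha) lc.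

Lemma Q_roots x : evalm Qp x = C0 -> Cmod x < 1.
Proof.
  intro Hx. assert (HP : Zpoly_evalC P x = C0).
  { rewrite <- lc_eval, (sdiv_eval lc (RtoC alpha) x lc_nnil). fold Qp. rewrite Hx, lc_eval, Hroot. ring. }
  destruct (Classical_Prop.classic (x = RtoC alpha)) as [E|NE].
  - exfalso. apply sep. rewrite <- sdiv_deriv by apply lc_nnil. fold Qp. rewrite <- E. auto.
  - apply Hconj; auto.
Qed.

Fixpoint st (n : nat) : list Z :=
  match n with
  | O => repeat 0%Z (pred d) ++ 1%Z :: nil
  | S m => tl (st m) ++ (- dotZ l0 (st m))%Z :: nil
  end.
Definition useq n := hd 0%Z (st n).

Lemma st_len n : length (st n) = d.
Proof.
  induction n; simpl. rewrite length_app, repeat_length. simpl. lia.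
  rewrite length_app. destruct (st n); simpl in *; lia.
Qed.

Lemma st_shift n i : (S i < d)%nat -> nth i (st (S n)) 0%Z = nth (S i) (st n) 0%Z.
Proof.
  intro Hi. simpl. pose proof (st_len n). destruct (st n) as [|x s]; simpl in *. lia.
  rewrite app_nth1 by lia. auto.
Qed.

Lemma st_last n : nth (pred d) (st (S n)) 0%Z = (- dotZ l0 (st n))%Z.
Proof.
  simpl. pose proof (st_len n). destruct (st n) as [|x s]; simpl in *. lia.
  replace (pred d) with (length s) by lia. apply nth_middle.
Qed.

Lemma st_u i : forall n, (i < d)%nat -> nth i (st n) 0%Z = useq (n + i).
Proof.
  induction i; intros n Hi. rewrite Nat.add_0_r. unfold useq. destruct (st n); auto.
  rewrite <- st_shift by lia. rewrite IHi by lia. f_equal. lia.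
Qed.

Lemma u_rec n : pappZ l0 useq n = 0%Z.
Proof.
  rewrite (pappZ_dot useq l0 (st n) n); [| rewrite st_len, l0_len; auto |].
  - rewrite l0_len. replace (n + d)%nat with (S n + pred d)%nat by lia.
    rewrite <- (st_u (pred d) (S n)) by lia. rewrite st_last. ring.
  - intros i Hi. rewrite l0_len in Hi. apply st_u. auto.
Qed.

Lemma u_init : useq (pred d) = 1%Z.
Proof.
  replace (pred d) with (0 + pred d)%nat at 1 by lia. rewrite <- (st_u (pred d) 0) by lia. simpl.
  replace (pred d) with (length (repeat 0%Z (pred d))) at 1 by apply repeat_length. apply nth_middle.
Qed.

Lemma u_decay_contra K th : 0 <= th < 1 -> 0 <= K -> (forall n, Rabs (IZR (useq n)) <= K * th ^ n) -> False.
Proof.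
  intros Hth HK Hb. destruct (decay_int_zero useq K th Hth HK Hb) as [N HN].
  destruct head_nz as [c0 [l' [E Hc]]].
  assert (forall n, useq n = 0%Z).
  { apply (pappZ_zero c0 l' useq Hc). intro n. rewrite <- E. apply u_rec. exists N; auto. }
  pose proof u_init. rewrite H in H0. discriminate.
Qed.

Lemma alpha_gt1 : 1 < Rabs alpha.
Proof.
  destruct (Rlt_or_le 1 (Rabs alpha)) as [H|H]; auto. exfalso.
  destruct (Rle_lt_or_eq_dec _ _ H) as [Hl|He].
  - assert (Hr : forall x, evalm lc x = C0 -> Cmod x < 1).
    { intros x Hx. rewrite lc_eval in Hx. destruct (Classical_Prop.classic (x = RtoC alpha)) as [E|NE].
      rewrite E, Cmod_RtoC. auto. apply Hconj; auto. }
    destruct (decay (length lc) lc eq_refl Hr (fun k => CZ (useq k))) as [K [th [Hth [HK Hb]]]].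
    { intro k. unfold lc. rewrite papp_Z, u_rec. unfold CZ, C0. auto. }
    apply (u_decay_contra K th Hth HK). intro n. rewrite <- Cmod_CZ. auto.
  - destruct (Rcase_abs alpha) as [E|E]; [rewrite Rabs_left in He by lra | rewrite Rabs_right in He by lra].
    apply (alpha_irr (-1) 1); [lia|]. simpl. lra.
    apply (alpha_irr 1 1); [lia|]. simpl. lra.
Qed.

Lemma W_decay : exists K th, 0 <= th < 1 /\ 0 <= K /\
  forall k, Rabs (IZR (useq (S k)) - alpha * IZR (useq k)) <= K * th ^ k.
Proof.
  set (w := fun k => CZ (useq k)).
  destruct (decay (length Qp) Qp eq_refl Q_roots (fun k => Csub (w (S k)) (Cmul (RtoC alpha) (w k))))
    as [K [th [Hth [HK Hb]]]].
  - intro k. pose proof (sdiv_papp lc (RtoC alpha) w k lc_nnil) as E.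
    rewrite lc_eval, Hroot in E. fold Qp in E. unfold lc in E. unfold w in E at 1. rewrite papp_Z, u_rec in E.
    replace (papp Qp (fun k0 => Csub (w (S k0)) (Cmul (RtoC alpha) (w k0))) k) with
      (Csub (CZ 0) (Cmul C0 (w k))). unfold CZ, C0, RtoC, Csub, Cmul; ceq. rewrite E. fold w. ring.
  - exists K, th. split; auto. split; auto. intro k. specialize (Hb k). unfold w, CZ in Hb.
    rewrite Cmul_RtoC, Csub_RtoC, Cmod_RtoC in Hb. auto.
Qed.

Lemma PV_seq : exists c B th, 0 <= th < 1 /\ 0 <= B /\ c <> 0 /\
  forall n, Rabs (IZR (useq n) - c * alpha ^ n) <= B * th ^ n.
Proof.
  destruct W_decay as [K [th [Hth [HK Hb]]]].
  pose proof alpha_gt1 as Ha. remember (Rabs alpha) as A eqn:HAe.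
  set (rh := th / A).
  assert (Hrh : 0 <= rh < 1).
  { unfold rh; split; [apply Rdiv_nonneg; lra|].
    replace 1 with (A / A) by (field; lra). apply Rmult_lt_compat_r. apply Rinv_0_lt_compat; lra. lra. }
  assert (HA0 : alpha <> 0) by apply alpha_nz.
  destruct (geom_cauchy (fun n => IZR (useq n) / alpha ^ n) (K / A) rh Hrh) as [c Hc].
  { apply Rdiv_nonneg; lra. }
  { intro n. replace (IZR (useq (S n)) / alpha ^ S n - IZR (useq n) / alpha ^ n) with
      ((IZR (useq (S n)) - alpha * IZR (useq n)) / alpha ^ S n) by (simpl; field; split; auto; apply pow_nonzero; auto).
    unfold Rdiv. rewrite Rabs_mult, Rabs_inv, <- RPow_abs, <- HAe.
    unfold rh. replace ((th / A) ^ n) with (th ^ n * / A ^ n) by (unfold Rdiv; rewrite Rpow_mult_distr, pow_inv; auto).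
    assert (0 < A ^ n) by (apply pow_lt; lra).
    assert (0 < / A ^ n) by (apply Rinv_0_lt_compat; lra).
    assert (0 < / A) by (apply Rinv_0_lt_compat; lra).
    simpl pow. rewrite Rinv_mult. specialize (Hb n).
    apply Rle_trans with (K * th ^ n * (/ A * / A ^ n)).
    apply Rmult_le_compat_r; [apply Rmult_le_pos; lra|]. auto. right; ring. }
  exists c, (K / A / (1 - rh)), th. split; auto. split. apply Rdiv_nonneg; [apply Rdiv_nonneg|]; lra.
  assert (Hb2 : forall n, Rabs (IZR (useq n) - c * alpha ^ n) <= K / A / (1 - rh) * th ^ n).
  { intro n. specialize (Hc n).
    replace (IZR (useq n) - c * alpha ^ n) with (- (alpha ^ n * (c - IZR (useq n) / alpha ^ n))) by (field; apply pow_nonzero; auto).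
    rewrite Rabs_Ropp, Rabs_mult, <- RPow_abs, <- HAe.
    assert (0 < A ^ n) by (apply pow_lt; lra).
    apply Rle_trans with (A ^ n * (K / A * rh ^ n / (1 - rh))). apply Rmult_le_compat_l; lra.
    replace (rh ^ n) with (th ^ n * / A ^ n) by (unfold rh, Rdiv; rewrite Rpow_mult_distr, pow_inv; auto).
    right. field. split; [lra|]. split; [|lra]. lra. }
  split; auto. intro Hc0. subst c.
  apply (u_decay_contra (K / A / (1 - rh)) th Hth). apply Rdiv_nonneg; [apply Rdiv_nonneg|]; lra.
  intro n. specialize (Hb2 n). rewrite Rmult_0_l, Rminus_0_r in Hb2. auto.
Qed.


Lemma alpha_pow_irr m p q : (1 <= m)%nat -> q <> 0%Z -> IZR q * alpha ^ m <> IZR p.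
Proof.
  intros Hm Hq E.
  destruct PV_seq as [c [B [th [Hth [HB [Hc Hb]]]]]].
  pose proof alpha_gt1 as Ha. pose proof alpha_nz as Ha0.
  set (u' := fun n => (q * useq (n + m) + (-p) * useq n)%Z).
  assert (Hu'0 : forall n, u' n = 0%Z).
  { destruct head_nz as [c0 [l' [El Hc0]]].
    apply (pappZ_zero c0 l' u' Hc0).
    - intro n. rewrite <- El. unfold u'.
      rewrite (pappZ_lin l0 (fun k => useq (k + m)%nat) useq q (-p) n), pappZ_shift, !u_rec. ring.
    - apply (decay_int_zero u' ((Rabs (IZR q) + Rabs (IZR p)) * B) th Hth).
      apply Rmult_le_pos; auto. pose proof (Rabs_pos (IZR q)); pose proof (Rabs_pos (IZR p)); lra.
      intro n. unfold u'. rewrite plus_IZR, !mult_IZR, opp_IZR.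
      replace (IZR q * IZR (useq (n + m)) + - IZR p * IZR (useq n)) with
        (IZR q * (IZR (useq (n + m)) - c * alpha ^ (n + m)) - IZR p * (IZR (useq n) - c * alpha ^ n)
         + c * alpha ^ n * (IZR q * alpha ^ m - IZR p)) by (rewrite pow_add; ring).
      rewrite E, Rminus_diag, Rmult_0_r, Rplus_0_r.
      eapply Rle_trans; [apply Rabs_triang|]. rewrite Rabs_Ropp, !Rabs_mult.
      pose proof (Hb (n + m)%nat). pose proof (Hb n).
      assert (th ^ (n + m) <= th ^ n) by (rewrite pow_add; pose proof (pow_le th n (proj1 Hth));
         assert (th ^ m <= 1) by (apply pow_le_one; lra); pose proof (pow_le th m (proj1 Hth)); nra).
      pose proof (Rabs_pos (IZR q)); pose proof (Rabs_pos (IZR p)).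
      assert (0 <= th ^ n) by (apply pow_le; lra).
      apply Rle_trans with (Rabs (IZR q) * (B * th ^ n) + Rabs (IZR p) * (B * th ^ n)).
      apply Rplus_le_compat. apply Rmult_le_compat_l; auto. nra. apply Rmult_le_compat_l; auto.
      right; ring. }
  set (e := fun n => IZR (useq n) - c * alpha ^ n).
  assert (Hp : p <> 0%Z).
  { intro Hp0. subst p. simpl in E. apply Rmult_integral in E. destruct E as [E|E].
    apply Hq. apply eq_IZR; auto. apply (pow_nonzero alpha m Ha0); auto. }
  assert (HqE : forall n, IZR q * e (n + m)%nat = IZR p * e n).
  { intro n. specialize (Hu'0 n). unfold u' in Hu'0. apply (f_equal IZR) in Hu'0.
    rewrite plus_IZR, !mult_IZR, opp_IZR in Hu'0. unfold e. rewrite pow_add.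
    replace (IZR q * (IZR (useq (n + m)) - c * (alpha ^ n * alpha ^ m))) with
      (IZR q * IZR (useq (n + m)) - c * alpha ^ n * (IZR q * alpha ^ m)) by ring.
    rewrite E. simpl in Hu'0. lra. }
  assert (Hqp : Rabs (IZR q) <= Rabs (IZR p)).
  { rewrite <- E, Rabs_mult, <- RPow_abs. assert (1 <= Rabs alpha ^ m) by (apply pow_R1_Rle; lra).
    pose proof (Rabs_pos (IZR q)). nra. }
  assert (Hpp : 0 < Rabs (IZR p)) by (apply Rabs_pos_lt; apply not_0_IZR; auto).
  assert (Hmono : forall n, Rabs (e n) <= Rabs (e (n + m)%nat)).
  { intro n. pose proof (HqE n). apply (f_equal Rabs) in H. rewrite !Rabs_mult in H.
    pose proof (Rabs_pos (e (n + m)%nat)). pose proof (Rabs_pos (e n)).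
    apply (Rmult_le_reg_l (Rabs (IZR p))); auto. rewrite <- H. apply Rmult_le_compat_r; auto. }
  assert (He0 : forall n, e n = 0).
  { intro n. destruct (Req_dec (e n) 0) as [|Hne]; auto. exfalso.
    assert (Hpos' : 0 < Rabs (e n)) by (apply Rabs_pos_lt; auto).
    assert (Hk : forall k, Rabs (e n) <= B * th ^ k).
    { intro k. assert (Rabs (e n) <= Rabs (e (n + k * m)%nat)).
      { induction k. simpl. rewrite Nat.add_0_r. lra.
        eapply Rle_trans; [apply IHk|]. replace (n + S k * m)%nat with ((n + k * m) + m)%nat by lia. apply Hmono. }
      eapply Rle_trans; [apply H|]. apply Rle_trans with (B * th ^ (n + k * m)). apply Hb.
      apply Rmult_le_compat_l; auto. apply pow_decr; [lra|]. nia. }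
    assert (Hr : Rabs th < 1) by (rewrite Rabs_right; lra).
    destruct (pow_lt_1_zero th Hr (Rabs (e n) / (B + 1))) as [N HN]. apply Rdiv_lt_0_compat; lra.
    specialize (HN N (le_n _)). rewrite Rabs_right in HN by (apply Rle_ge, pow_le; lra).
    specialize (Hk N). assert (0 <= th ^ N) by (apply pow_le; lra).
    apply Rmult_lt_compat_l with (r := B + 1) in HN; [|lra].
    replace ((B + 1) * (Rabs (e n) / (B + 1))) with (Rabs (e n)) in HN by (field; lra). nra. }
  assert (E0 : IZR (useq 0) = c) by (pose proof (He0 0%nat); unfold e in H; simpl in H; lra).
  assert (E1 : IZR (useq 1) = c * alpha) by (pose proof (He0 1%nat); unfold e in H; simpl in H; lra).
  apply (alpha_irr (useq 1) (useq 0)).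
  intro Z0. rewrite Z0 in E0. simpl in E0. auto.
  rewrite E0, E1. ring.
Qed.

End PV.


Fixpoint Rprod (g : nat -> R) (n : nat) : R :=
  match n with O => 1 | S m => Rprod g m * g m end.

Lemma Rprod_split g a J : Rprod g (a + J) = Rprod g a * Rprod (fun j => g (a + j)%nat) J.
Proof. induction J; simpl. rewrite Nat.add_0_r; ring. rewrite Nat.add_succ_r. simpl. rewrite IHJ. ring. Qed.

Lemma Rprod_pos g n : (forall i, (i < n)%nat -> 0 < g i) -> 0 < Rprod g n.
Proof. induction n; intro H; simpl. lra. apply Rmult_lt_0_compat. apply IHn; intros; apply H; lia. apply H; lia. Qed.

Lemma Rprod_lower g x n : (forall j, 0 <= g j) -> (forall j, 0 <= x j) -> (forall j, 1 - x j <= g j) ->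
  Rpsum x n <= 1 -> 1 - Rpsum x n <= Rprod g n.
Proof.
  intros Hg Hx Hgx. assert (Hx' := Hx). induction n; simpl; intro Hs. lra.
  pose proof (Hx n). specialize (Hgx n). specialize (Hg n).
  assert (Hp : 0 <= Rpsum x n) by (pose proof (Rpsum_mono x 0 n Hx' ltac:(lia)) as Hq; simpl in Hq; lra).
  assert (Rpsum x n <= 1) by lra. specialize (IHn H0).
  assert ((1 - Rpsum x n) * (1 - x n) <= Rprod g n * g n).
  { apply Rmult_le_compat; lra. }
  nra.
Qed.

Lemma pow2_ge n : (n + 1 <= 2 ^ n)%nat.
Proof. induction n; simpl; lia. Qed.

Lemma exp_beats_lin a b : exists k, (a + b * k < 2 ^ k)%nat.
Proof.
  set (n := (a + 2 * b + 1)%nat). exists (2 * n)%nat.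
  pose proof (pow2_ge n). replace (2 ^ (2 * n))%nat with (2 ^ n * 2 ^ n)%nat.
  2:{ rewrite <- Nat.pow_add_r. f_equal. lia. }
  unfold n in *. nia.
Qed.

Lemma ASL (bad : R -> Prop) (Zl : list R) (T : nat -> R) (L K : nat) :
  (forall y, bad y -> exists z m, In z Zl /\ y = z + IZR m) ->
  (forall m : Z, ~ bad (IZR m)) ->
  (forall i, (i < L)%nat -> (exists m : Z, T i = IZR m) \/ (forall n : Z, n <> 0%Z -> forall m : Z, IZR n * T i <> IZR m)) ->
  (length Zl * L < K)%nat ->
  exists s', (1 <= s' <= K)%nat /\ forall i, (i < L)%nat -> ~ bad (INR s' * T i).
Proof.
  intros Hz Hint Hrat HK. apply Classical_Prop.NNPP. intro Hn.
  assert (Hall : forall s, exists p : nat * nat, (1 <= s <= K)%nat ->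
     (fst p < L)%nat /\ (snd p < length Zl)%nat /\ bad (INR s * T (fst p)) /\
     exists m, INR s * T (fst p) = nth (snd p) Zl 0 + IZR m).
  { intro s. destruct (Classical_Prop.classic (1 <= s <= K)%nat) as [Hs|Hs].
    2:{ exists (0, 0)%nat; intro; contradiction. }
    assert (exists i, (i < L)%nat /\ bad (INR s * T i)).
    { apply Classical_Prop.NNPP. intro Hn2. apply Hn. exists s. split; auto. intros i Hi Hb. apply Hn2. exists i; auto. }
    destruct H as [i [Hi Hb]]. destruct (Hz _ Hb) as [z [m [Hzin Hzm]]].
    destruct (In_nth Zl z 0 Hzin) as [j [Hj Hjz]].
    exists (i, j). intros _. simpl. split; auto. split; auto. split; auto. exists m. rewrite Hjz. auto. }
  set (g := fun s => proj1_sig (constructive_indefinite_description _ (Hall s))).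
  assert (Hg : forall s, (1 <= s <= K)%nat -> (fst (g s) < L)%nat /\ (snd (g s) < length Zl)%nat /\
              bad (INR s * T (fst (g s))) /\
              exists m, INR s * T (fst (g s)) = nth (snd (g s)) Zl 0 + IZR m).
  { intros s Hs. unfold g. destruct (constructive_indefinite_description _ _) as [p Hp]. simpl. auto. }
  assert (Hinj : forall s1 s2, (1 <= s1 <= K)%nat -> (1 <= s2 <= K)%nat -> g s1 = g s2 -> s1 = s2).
  { intros s1 s2 H1 H2 E. destruct (Hg s1 H1) as [Hi1 [Hj1 [B1 [m1 E1]]]]. destruct (Hg s2 H2) as [Hi2 [Hj2 [B2 [m2 E2]]]].
    rewrite E in E1, B1. set (i := fst (g s2)) in *. set (z := nth (snd (g s2)) Zl 0) in *.
    destruct (Hrat i Hi2) as [[mi Ei]|Hirr].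
    - exfalso. apply (Hint (Z.of_nat s1 * mi)%Z). rewrite mult_IZR, <- INR_IZR_INZ, <- Ei. auto.
    - destruct (Nat.eq_dec s1 s2) as [|Hne]; auto. exfalso.
      apply (Hirr (Z.of_nat s1 - Z.of_nat s2)%Z ltac:(lia) (m1 - m2)%Z).
      rewrite !minus_IZR, <- !INR_IZR_INZ. lra. }
  assert (HND : NoDup (map g (seq 1 K))).
  { apply NoDup_map_NoDup_ForallPairs; [|apply seq_NoDup].
    intros s1 s2 Hs1 Hs2 E. apply in_seq in Hs1. apply in_seq in Hs2. apply Hinj; auto; lia. }
  assert (Hincl : incl (map g (seq 1 K)) (list_prod (seq 0 L) (seq 0 (length Zl)))).
  { intros p Hp. apply in_map_iff in Hp. destruct Hp as [s [Es Hs]]. apply in_seq in Hs.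
    destruct (Hg s ltac:(lia)) as [Hi [Hj _]]. subst p. destruct (g s) as [i j]. simpl in *.
    apply in_prod_iff. split; apply in_seq; lia. }
  pose proof (NoDup_incl_length HND Hincl). rewrite length_map, length_seq, length_prod, !length_seq in H.
  lia.
Qed.


Lemma geom_sum_le th J : 0 <= th < 1 -> Rpsum (fun j => th ^ j) J <= 1 / (1 - th).
Proof.
  intro H. assert (E : Rpsum (fun j => th ^ j) J * (1 - th) = 1 - th ^ J).
  { induction J; simpl. ring. rewrite Rmult_plus_distr_r, IHJ. ring. }
  assert (0 <= th ^ J) by (apply pow_le; lra).
  apply (Rmult_le_reg_r (1 - th)). lra. rewrite E. unfold Rdiv. rewrite Rmult_1_l, Rinv_l; lra.
Qed.

Lemma pow_id_aux alpha i M j M' m : alpha <> 0 -> (j + M = i + M' + m)%nat ->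
  forall c, c * alpha ^ j / alpha ^ M' = c * alpha ^ i / alpha ^ M * alpha ^ m.
Proof.
  intros Ha E c. assert (Hp : forall n, alpha ^ n <> 0) by (intro; apply pow_nonzero; auto).
  assert (E2 : alpha ^ j * alpha ^ M = alpha ^ i * alpha ^ M' * alpha ^ m) by (rewrite <- !pow_add; f_equal; lia).
  field_simplify; auto. apply (Rmult_eq_reg_r (alpha ^ M)); auto.
  unfold Rdiv. replace (c * alpha ^ j * / alpha ^ M' * alpha ^ M) with (c * (alpha ^ j * alpha ^ M) * / alpha ^ M') by ring.
  rewrite E2. field. split; auto.
Qed.

Lemma rat_unique_aux alpha c i M j M' p1 q1 p2 q2 :
  alpha <> 0 -> c <> 0 ->
  (forall m p q, (1 <= m)%nat -> q <> 0%Z -> IZR q * alpha ^ m <> IZR p) ->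
  q1 <> 0%Z -> q2 <> 0%Z ->
  IZR q1 * (c * alpha ^ i / alpha ^ M) = IZR p1 -> IZR q2 * (c * alpha ^ j / alpha ^ M') = IZR p2 ->
  (i + M' < j + M)%nat -> False.
Proof.
  intros Ha Hc Hirr Hq1 Hq2 E1 E2 Hlt.
  set (m := (j + M - (i + M'))%nat).
  rewrite (pow_id_aux alpha i M j M' m Ha ltac:(unfold m; lia) c) in E2.
  set (x1 := c * alpha ^ i / alpha ^ M) in *.
  assert (Hx1 : x1 <> 0).
  { unfold x1. unfold Rdiv. apply Rmult_integral_contrapositive_currified.
    apply Rmult_integral_contrapositive_currified; auto. apply pow_nonzero; auto. apply Rinv_neq_0_compat, pow_nonzero; auto. }
  assert (Hp1 : p1 <> 0%Z).
  { intro Hp. subst p1. simpl in E1. apply Rmult_integral in E1. destruct E1 as [E|E]; auto. apply Hq1, eq_IZR; auto. }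
  apply (Hirr m (q1 * p2)%Z (q2 * p1)%Z ltac:(unfold m; lia) ltac:(lia)).
  rewrite !mult_IZR. rewrite <- E1, <- E2. ring.
Qed.

Lemma Rpsum_geom_scal C th J : 0 <= C -> 0 <= th < 1 -> Rpsum (fun j => C * th ^ j) J <= C / (1 - th).
Proof.
  intros HC Hth. rewrite Rpsum_scal. pose proof (geom_sum_le th J Hth).
  unfold Rdiv in *. rewrite Rmult_1_l in H. apply Rmult_le_compat_l; auto.
Qed.


Theorem mainTheorem1 (alpha : R) (a : nat -> Cplx) (tau : nat -> Z) (phihat : R -> Cplx) :
  is_PV alpha ->
  (exists eta, eta > 0 /\ exists l,
     infinite_sum (fun k => Cmod (a k) * exp (eta * Rabs (IZR (tau k)))) l) ->
  Cseries a (RtoC (Rabs alpha)) ->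
  refinable_FT alpha a tau phihat ->
  ~ vanishes_at_infinity phihat.
Proof.
  intros [d [P [Hd [[Hlen [Hlead [Hroot Hmin]]] Hconj]]]] [eta [Heta [l Hl]]] Hsum [Hcont [H0 Hfe]] Hvan.
  pose proof (alpha_gt1 alpha d P Hd Hlen Hlead Hroot Hmin Hconj) as Ha.
  pose proof (alpha_nz alpha d P Hd Hlen Hmin) as Ha0.
  pose proof (alpha_pow_irr alpha d P Hd Hlen Hlead Hroot Hmin Hconj) as Hirr.
  destruct (PV_seq alpha d P Hd Hlen Hlead Hroot Hmin Hconj) as [c [B [th [Hth [HB [Hc Hu]]]]]].
  set (u := useq d P) in *.
  set (A := Rabs alpha) in *.
  set (f := Sf a tau eta l Heta Hl).
  assert (HA0 : 0 < A) by lra.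
  assert (Hf0 : f 0 = RtoC A).
  { apply Sf_unique. eapply Cseries_ext; [|apply Hsum]. intro k. unfold term.
    replace (-2 * PI * IZR (tau k) * 0) with 0 by ring. unfold Cexpi. rewrite cos_0, sin_0.
    unfold Cmul; destruct (a k); apply Cplx_eq; simpl; ring. }
  assert (Hf0nz : f 0 <> C0).
  { rewrite Hf0. intro E. apply RtoC_eq0 in E. lra. }
  assert (Hfm : forall m, f (IZR m) = RtoC A).
  { intro m. replace (IZR m) with (0 + IZR m) by ring. unfold f. rewrite Sf_periodic. auto. }
  assert (KR : forall y, A * Cmod (phihat (alpha * y)) = Cmod (f y) * Cmod (phihat y)).
  { intro y. destruct (Hfe (alpha * y)) as [v [Hv Ev]].
    replace (alpha * y / alpha) with y in * by (field; auto).
    unfold ahat_val in Hv. fold A in Hv.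
    assert (Efy : f y = Cmul (RtoC A) v) by (apply Sf_unique; exact Hv).
    rewrite Ev, Efy, !Cmod_mul, Cmod_RtoC. rewrite Rabs_right by lra. ring. }
  set (g := fun y i => Cmod (f (alpha ^ i * y)) / A).
  assert (Iter : forall y n, Cmod (phihat (alpha ^ n * y)) = Rprod (g y) n * Cmod (phihat y)).
  { intros y n. induction n. simpl. rewrite Rmult_1_l, Rmult_1_l; auto.
    replace (alpha ^ S n * y) with (alpha * (alpha ^ n * y)) by (simpl; ring).
    simpl Rprod. apply (Rmult_eq_reg_l A); [|lra]. rewrite KR, IHn. unfold g. field. lra. }
  set (p0 := Cmod (phihat 0) / 2).
  assert (Hp0 : 0 < p0).
  { unfold p0. pose proof (Cmod_ge0 (phihat 0)). destruct (Rle_lt_or_eq_dec _ _ H); [lra|].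
    exfalso; apply H0, Cmod_eq0; auto. }
  destruct (Hcont 0 p0 Hp0) as [r0 [Hr0 Hcr]].
  assert (Hsmall : forall y, Rabs y < r0 -> p0 <= Cmod (phihat y)).
  { intros y Hy. specialize (Hcr y ltac:(rewrite Rminus_0_r; auto)).
    pose proof (Cmod_sub_le (phihat 0) (phihat y)). rewrite Cmod_sub_sym in H. unfold p0 in *. lra. }
  set (Lc := 2 * rho eta * l).
  assert (HLc : 0 <= Lc).
  { unfold Lc. pose proof (rho_pos eta Heta). pose proof (l_ge0 a tau eta l Hl). nra. }
  assert (Hnear : forall y (m : Z), A - Lc * Rabs (y - IZR m) <= Cmod (f y)).
  { intros y m. pose proof (Sf_lip a tau eta l Heta Hl (IZR m) (y - IZR m)). fold f in H.
    replace (IZR m + (y - IZR m)) with y in H by ring. rewrite Hfm in H.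
    pose proof (Cmod_sub_le (RtoC A) (f y)). rewrite Cmod_sub_sym in H.
    rewrite Cmod_RtoC, Rabs_right in H1 by lra. fold Lc in H. lra. }
  destruct (zeros_mod1 a tau eta l Heta Hl Hf0nz) as [Zl HZl]. fold f in HZl.
  set (ratp := fun x : R => exists p q : Z, q <> 0%Z /\ IZR q * x = IZR p).
  assert (Hru : forall i M j M', ratp (c * alpha ^ i / alpha ^ M) -> ratp (c * alpha ^ j / alpha ^ M') -> (i + M' = j + M)%nat).
  { intros i M j M' [p1 [q1 [Hq1 E1]]] [p2 [q2 [Hq2 E2]]].
    destruct (lt_eq_lt_dec (i + M') (j + M)) as [[Hlt|Heq]|Hgt]; auto; exfalso.
    - apply (rat_unique_aux alpha c i M j M' p1 q1 p2 q2); auto.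
    - apply (rat_unique_aux alpha c j M' i M p2 q2 p1 q1); auto. }
  assert (Hq0 : exists q0 : Z, (0 < q0)%Z /\ forall i M, ratp (c * alpha ^ i / alpha ^ M) ->
              exists m : Z, IZR q0 * (c * alpha ^ i / alpha ^ M) = IZR m).
  { destruct (classic (exists i M, ratp (c * alpha ^ i / alpha ^ M))) as [[i0 [M0 Hr0']]|Hno].
    - pose proof Hr0' as Hr0c. destruct Hr0' as [p0' [q0' [Hq0' E0]]].
      exists (Z.abs q0'). split; [lia|]. intros i M Hr.
      pose proof (Hru i M i0 M0 Hr Hr0c) as Heq.
      assert (Eq : c * alpha ^ i / alpha ^ M = c * alpha ^ i0 / alpha ^ M0).
      { rewrite (pow_id_aux alpha i0 M0 i M 0 Ha0 ltac:(lia) c). simpl. ring. }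
      rewrite Eq. destruct (Z.abs_spec q0') as [[_ Eabs]|[_ Eabs]]; rewrite Eabs.
      + exists p0'. auto.
      + exists (- p0')%Z. rewrite !opp_IZR. rewrite <- E0. ring.
    - exists 1%Z. split; [lia|]. intros i M Hr. exfalso. apply Hno. exists i, M. auto. }
  destruct Hq0 as [q0 [Hq0pos Hq0]].
  assert (Hq0R : 1 <= IZR q0) by (apply IZR_le; lia).
  set (delta := A * (1 - th) / (2 * (Lc + 1))).
  assert (Hdelta : 0 < delta) by (unfold delta; apply Rdiv_lt_0_compat; [apply Rmult_lt_0_compat|]; lra).
  assert (Hthr : Rabs th < 1) by (rewrite Rabs_right; lra).
  destruct (pow_lt_1_zero th Hthr (delta / (IZR q0 * B + 1))) as [N1 HN1].
  { apply Rdiv_lt_0_compat; auto. nra. }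
  destruct (pow_lt_1_zero th Hthr (1/2)) as [N0 HN0]. lra.
  assert (HAr : Rabs A > 1) by (rewrite Rabs_right; lra).
  destruct (Pow_x_infinity A HAr ((IZR q0 * Rabs c + 1) / r0)) as [M1 HM1].
  destruct (Pow_x_infinity A HAr 2) as [M0 HM0].
  set (r := length Zl).
  destruct (exp_beats_lin (r * (M1 + N1)) (r * (M0 + N0))) as [k Hk].
  set (M := (M1 + M0 * k)%nat). set (N := (N1 + N0 * k)%nat). set (L := (M + N)%nat).
  set (T := fun i => IZR q0 * (c * alpha ^ i / alpha ^ M)).
  destruct (ASL (fun y => f y = C0) Zl T L (2 ^ k)) as [s' [Hs' Hgood]].
  - exact HZl.
  - intros m E. rewrite Hfm in E. apply RtoC_eq0 in E. lra.
  - intros i Hi. destruct (classic (ratp (c * alpha ^ i / alpha ^ M))) as [Hr|Hnr].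
    + left. destruct (Hq0 i M Hr) as [m Em]. exists m. unfold T. auto.
    + right. intros n Hn m E. apply Hnr. exists m, (n * q0)%Z. split. lia.
      rewrite mult_IZR. rewrite <- E. unfold T. ring.
  - unfold L, M, N. fold r. nia.
  -
    set (y0 := INR s' * IZR q0 * c / alpha ^ M).
    assert (HaM : forall n, alpha ^ n <> 0) by (intro; apply pow_nonzero; auto).
    assert (Hpt : forall i, alpha ^ i * y0 = INR s' * T i).
    { intro i. unfold y0, T. field. auto. }
    assert (Hs'R : 1 <= INR s') by (apply (le_INR 1); lia).
    assert (Hs'K : INR s' <= 2 ^ k).
    { replace (2 ^ k) with (INR (2 ^ k)). apply le_INR; lia. rewrite pow_INR. f_equal. }
    assert (Hc0 : 0 < Rabs c) by (apply Rabs_pos_lt; auto).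
    assert (HApow : forall n, Rabs (alpha ^ n) = A ^ n) by (intro; rewrite <- RPow_abs; auto).
    assert (HAn : forall n, 0 < A ^ n) by (intro; apply pow_lt; lra).
    assert (HM1' : (IZR q0 * Rabs c + 1) / r0 <= A ^ M1).
    { specialize (HM1 M1 (le_n _)). rewrite Rabs_right in HM1 by (left; apply HAn). lra. }
    assert (HM0' : 2 <= A ^ M0).
    { specialize (HM0 M0 (le_n _)). rewrite Rabs_right in HM0 by (left; apply HAn). lra. }
    assert (HAM : A ^ M1 * 2 ^ k <= A ^ M).
    { unfold M. rewrite pow_add, pow_mult. apply Rmult_le_compat_l. left; apply HAn. apply pow_incr. lra. }
    assert (Hy0abs : Rabs y0 * A ^ M = INR s' * IZR q0 * Rabs c).
    { unfold y0. unfold Rdiv. rewrite !Rabs_mult, Rabs_inv, HApow.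
      rewrite (Rabs_right (INR s')) by lra. rewrite (Rabs_right (IZR q0)) by lra.
      field. apply Rgt_not_eq, HAn. }
    assert (Hy0pos : 0 < Rabs y0).
    { apply Rabs_pos_lt. unfold y0. unfold Rdiv. repeat apply Rmult_integral_contrapositive_currified; try lra; auto.
      apply Rinv_neq_0_compat; auto. }
    assert (Hy0r : Rabs y0 < r0).
    { assert (Rabs y0 * (A ^ M1 * 2 ^ k) <= 2 ^ k * (IZR q0 * Rabs c)).
      { apply Rle_trans with (Rabs y0 * A ^ M). apply Rmult_le_compat_l; lra. rewrite Hy0abs.
        rewrite Rmult_assoc. apply Rmult_le_compat_r; [|lra]. apply Rmult_le_pos; lra. }
      assert (H2k : 0 < 2 ^ k) by (apply pow_lt; lra).
      assert (Rabs y0 * A ^ M1 <= IZR q0 * Rabs c) by nra.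
      assert (Rabs y0 * ((IZR q0 * Rabs c + 1) / r0) <= Rabs y0 * A ^ M1) by (apply Rmult_le_compat_l; lra).
      assert (Rabs y0 * ((IZR q0 * Rabs c + 1) / r0) < IZR q0 * Rabs c + 1) by lra.
      unfold Rdiv in H2. apply (Rmult_lt_reg_r ((IZR q0 * Rabs c + 1) / r0)).
      apply Rdiv_lt_0_compat; nra. unfold Rdiv. replace (r0 * ((IZR q0 * Rabs c + 1) * / r0)) with (IZR q0 * Rabs c + 1) by (field; lra).
      lra. }
    assert (Hphy0 : p0 <= Cmod (phihat y0)) by (apply Hsmall; auto).
    assert (Hhead : 0 < Rprod (g y0) L).
    { apply Rprod_pos. intros i Hi. unfold g. rewrite Hpt. apply Rdiv_lt_0_compat; auto.
      pose proof (Cmod_ge0 (f (INR s' * T i))). destruct (Rle_lt_or_eq_dec _ _ H); auto.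
      exfalso. apply (Hgood i Hi). apply Cmod_eq0. auto. }
    set (x := fun j => Lc / A * delta * th ^ j).
    assert (Hx0 : forall j, 0 <= x j).
    { intro j. unfold x. apply Rmult_le_pos. apply Rmult_le_pos. apply Rdiv_nonneg; lra. lra. apply pow_le; lra. }
    assert (Hth2 : th ^ N0 < 1 / 2) by (specialize (HN0 N0 (le_n _)); rewrite Rabs_right in HN0 by (apply Rle_ge, pow_le; lra); lra).
    assert (Hth1 : IZR q0 * B * th ^ N1 <= delta).
    { specialize (HN1 N1 (le_n _)). rewrite Rabs_right in HN1 by (apply Rle_ge, pow_le; lra).
      assert (0 <= th ^ N1) by (apply pow_le; lra).
      apply Rmult_lt_compat_l with (r := IZR q0 * B + 1) in HN1; [|nra].
      replace ((IZR q0 * B + 1) * (delta / (IZR q0 * B + 1))) with delta in HN1 by (field; nra). nra. }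
    assert (Htail : forall j, 1 - x j <= g y0 (L + j)%nat).
    { intro j. unfold g. rewrite Hpt.
      set (m := (Z.of_nat s' * q0 * u (N + j)%nat)%Z).
      pose proof (Hnear (INR s' * T (L + j)%nat) m).
      assert (Hdist : Rabs (INR s' * T (L + j)%nat - IZR m) <= delta * th ^ j).
      { unfold m, T. rewrite !mult_IZR, <- INR_IZR_INZ.
        replace (c * alpha ^ (L + j) / alpha ^ M) with (c * alpha ^ (N + j)).
        2:{ unfold L. rewrite <- Nat.add_assoc, (pow_add alpha M (N + j)). field. auto. }
        replace (INR s' * (IZR q0 * (c * alpha ^ (N + j))) - INR s' * IZR q0 * IZR (u (N + j)%nat))
          with (- (INR s' * IZR q0 * (IZR (u (N + j)%nat) - c * alpha ^ (N + j)))) by ring.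
        rewrite Rabs_Ropp, Rabs_mult, (Rabs_right (INR s' * IZR q0)) by nra.
        specialize (Hu (N + j)%nat).
        apply Rle_trans with (INR s' * IZR q0 * (B * th ^ (N + j))). apply Rmult_le_compat_l; auto. nra.
        unfold N. rewrite !pow_add, pow_mult.
        assert (Hk2 : (th ^ N0) ^ k <= (1 / 2) ^ k) by (apply pow_incr; split; [apply pow_le|]; lra).
        assert (E2 : 2 ^ k * (1 / 2) ^ k = 1) by (rewrite <- Rpow_mult_distr; replace (2 * (1 / 2)) with 1 by field; apply pow1).
        assert (0 <= th ^ N1) by (apply pow_le; lra). assert (0 <= th ^ j) by (apply pow_le; lra).
        assert (0 <= (th ^ N0) ^ k) by (apply pow_le, pow_le; lra).
        assert (0 <= (1/2) ^ k) by (apply pow_le; lra).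
        assert (HXY : 0 <= th ^ N1 * (th ^ N0) ^ k * th ^ j <= th ^ N1 * (1 / 2) ^ k * th ^ j).
        { split. apply Rmult_le_pos; [apply Rmult_le_pos|]; auto.
          apply Rmult_le_compat_r; auto. apply Rmult_le_compat_l; auto. }
        set (X := th ^ N1 * (th ^ N0) ^ k * th ^ j) in *. set (Y := th ^ N1 * (1 / 2) ^ k * th ^ j) in *.
        assert (HBY : 0 <= B * Y) by (apply Rmult_le_pos; lra).
        apply Rle_trans with (INR s' * IZR q0 * (B * Y)).
        { apply Rmult_le_compat_l. nra. apply Rmult_le_compat_l; lra. }
        apply Rle_trans with (2 ^ k * IZR q0 * (B * Y)).
        { apply Rmult_le_compat_r; auto. apply Rmult_le_compat_r; lra. }
        unfold Y.
        replace (2 ^ k * IZR q0 * (B * (th ^ N1 * (1 / 2) ^ k * th ^ j))) with ((2 ^ k * (1 / 2) ^ k) * (IZR q0 * B * th ^ N1) * th ^ j) by ring.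
        rewrite E2, Rmult_1_l. apply Rmult_le_compat_r; auto. }
      unfold x.
      assert (Lc * Rabs (INR s' * T (L + j)%nat - IZR m) <= Lc * (delta * th ^ j)) by (apply Rmult_le_compat_l; auto).
      replace (1 - Lc / A * delta * th ^ j) with ((A - Lc * (delta * th ^ j)) / A) by (field; lra).
      unfold Rdiv. apply Rmult_le_compat_r. left; apply Rinv_0_lt_compat; lra. lra. }
    assert (Hsumx : forall J, Rpsum x J <= 1 / 2).
    { intro J. unfold x. eapply Rle_trans. apply Rpsum_geom_scal; auto. apply Rmult_le_pos. apply Rdiv_nonneg; lra. lra.
      unfold delta. replace (Lc / A * (A * (1 - th) / (2 * (Lc + 1))) / (1 - th)) with (Lc / (2 * (Lc + 1))) by (field; lra).
      apply (Rmult_le_reg_r (2 * (Lc + 1))). lra. unfold Rdiv. rewrite Rmult_assoc, Rinv_l by lra. lra. }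
    assert (Hgnn : forall i, 0 <= g y0 i) by (intro; unfold g; apply Rdiv_nonneg; [apply Cmod_ge0|lra]).
    assert (Hlow : forall J, Rprod (g y0) L * (1 / 2) * p0 <= Cmod (phihat (alpha ^ (L + J) * y0))).
    { intro J. rewrite Iter, Rprod_split.
      pose proof (Rprod_lower (fun j => g y0 (L + j)%nat) x J ltac:(intro; apply Hgnn) Hx0 Htail ltac:(specialize (Hsumx J); lra)).
      specialize (Hsumx J).
      assert (1/2 <= Rprod (fun j => g y0 (L + j)%nat) J) by lra.
      apply Rmult_le_compat. apply Rmult_le_pos; lra. lra. apply Rmult_le_compat_l; lra. lra. }
    set (eps0 := Rprod (g y0) L * (1 / 2) * p0).
    assert (Heps0 : eps0 > 0) by (unfold eps0; apply Rmult_lt_0_compat; [apply Rmult_lt_0_compat|]; lra).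
    destruct (Hvan eps0 Heps0) as [Mv HMv].
    destruct (Pow_x_infinity A HAr ((Rabs Mv + 1) / Rabs y0)) as [n0 Hn0].
    specialize (Hn0 (L + n0)%nat ltac:(lia)). rewrite Rabs_right in Hn0 by (left; apply HAn).
    specialize (Hlow n0).
    assert (Rabs (alpha ^ (L + n0) * y0) > Mv).
    { rewrite Rabs_mult, HApow. apply Rmult_ge_compat_r with (r := Rabs y0) in Hn0; [|lra].
      replace ((Rabs Mv + 1) / Rabs y0 * Rabs y0) with (Rabs Mv + 1) in Hn0 by (field; lra).
      pose proof (Rle_abs Mv). lra. }
    specialize (HMv _ H). unfold eps0 in HMv. lra.
Qed.
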